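(* Let $h:[0,1]\to(0,\infty)$ and $f:[0,\infty)\to[0,\infty)$ be continuously differentiable, suppose there is $t_0\ge0$ with $f>0$ on $[t_0,\infty)$ and $f\in C^2([t_0,\infty))$, put $g=\log f$ on $[t_0,\infty)$, and assume condition (H1) of the context. Let $(\lambda_n,\mu_n,u_n)\in(0,\infty)\times(0,\infty)\times C^2([0,1])$ satisfy $-u_n''-\frac1r u_n'=\lambda_n h(r)f(u_n)$, $u_n>0$ in $(0,1)$, $u_n(0)=\mu_n$, $u_n'(0)=0=u_n(1)$, with $\mu_n\to\infty$. Define $\gamma_{0,n}>0$ by $\lambda_n h(0)f'(\mu_n)\gamma_{0,n}^2=1$, and for $r\in[0,1]$ with $u_n(r)\ge t_0$ let $$\phi_n(r)=\lambda_n r^2 h(r)f'(u_n(r)),\qquad \psi_n(r)=-r\,g'(u_n(r))\,u_n'(r).$$ Then, up to a subsequence, there exists $(r_{1,n})\subset(0,1)$ such that $\phi_n(r_{1,n})$ is a local maximum value of $\phi_n$ (in particular $\phi_n'(r_{1,n})=0$) for all $n$, and as $n\to\infty$: $\phi_n(r_{1,n})\to2$, $\psi_n(r_{1,n})\to2$, $r_{1,n}/\gamma_{0,n}\to2\sqrt2$, $$u_n(r_{1,n})=\mu_n+O\Big(\frac1{g(\mu_n)}\Big)\frac{g(\mu_n)}{g'(\mu_n)},$$ $g(u_n(r_{1,n}))/g(\mu_n)\to1$ and $g'(u_n(r_{1,n}))/g'(\mu_n)\to1$.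
   Context: Condition (H1): (i) $g'(t)>0$ and $g''(t)>0$ for all $t\ge t_0$, and there is a pair $(q,p)$ with either $q=1$ and $p\in(0,\infty]$, or $q\in(1,\infty)$ and $p\in(0,\infty)$, such that $\lim_{t\to\infty}\frac{g'(t)^2}{g(t)g''(t)}=q$ and $\lim_{t\to\infty}\frac{tg'(t)}{g(t)}=p$; (ii) if $q=1$, then $tg'(t)/g(t)$ is nondecreasing on $[t_0,\infty)$ and there exist $k\in\mathbb{N}$ and $\hat g\in C^2([t_0,\infty))$ with $f=\exp_k\circ\hat g$ and $\hat g'/\hat g$ nonincreasing on $[t_0,\infty)$ ($\exp_1=\exp$, $\exp_k=\exp_{k-1}\circ\exp$). *)

(* Defs.v *)
From Stdlib Require Import Reals Lra.
From Coquelicot Require Import Coquelicot.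
Open Scope R_scope.

Definition deriv_within (D : R -> Prop) (F F' : R -> R) : Prop :=
  forall x, D x ->
    filterlim (fun y => (F y - F x) / (y - x))
      (within (fun y => D y /\ y <> x) (locally x)) (locally (F' x)).

Definition continuous_within (D : R -> Prop) (F : R -> R) : Prop :=
  forall x, D x -> filterlim F (within D (locally x)) (locally (F x)).

Definition C1_with (D : R -> Prop) (F F1 : R -> R) : Prop :=
  deriv_within D F F1 /\ continuous_within D F1.

Definition C2_with (D : R -> Prop) (F F1 F2 : R -> R) : Prop :=
  deriv_within D F F1 /\ deriv_within D F1 F2 /\ continuous_within D F2.

Definition exp_iter (k : nat) : R -> R := Nat.iter k exp.

Definition Icc (a b : R) : R -> Prop := fun x => a <= x <= b.
Definition Ici (a : R) : R -> Prop := fun x => a <= x.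

(* Main.v *)
Require Import Defs.
From Stdlib Require Import Reals Lra Lia.
From Stdlib Require Import ClassicalEpsilon.
From Coquelicot Require Import Coquelicot.
Open Scope R_scope.

Lemma ballR (x e y : R) : ball x e y <-> Rabs (y - x) < e.
Proof. apply iff_refl. Qed.

Lemma der_eq (f : R -> R) (x l l' : R) : is_derive f x l -> l = l' -> is_derive f x l'.
Proof. intros H <-; exact H. Qed.

Lemma der_cont (f : R -> R) x l : is_derive f x l -> continuity_pt f x.
Proof.
  intros H. apply continuity_pt_filterlim. apply (ex_derive_continuous (K:=R_AbsRing) (V:=R_NormedModule)). exists l; exact H.
Qed.

Lemma mono (F F' : R -> R) a b : a <= b ->
  (forall x, a <= x <= b -> is_derive F x (F' x) /\ 0 <= F' x) -> F a <= F b.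
Proof.
  intros Hab HD. destruct (Req_dec a b) as [->|Hne]; [lra|].
  destruct (MVT_gen F a b F') as [c [Hc Heq]].
  - intros x Hx. rewrite Rmin_left in Hx by lra; rewrite Rmax_right in Hx by lra.
    apply HD; lra.
  - intros x Hx. rewrite Rmin_left in Hx by lra; rewrite Rmax_right in Hx by lra.
    apply der_cont with (F' x). apply HD; lra.
  - rewrite Rmin_left in Hc by lra; rewrite Rmax_right in Hc by lra.
    destruct (HD c Hc) as [_ Hp]. nra.
Qed.

Lemma dw_int D (F F' : R -> R) a b x : deriv_within D F F' ->
  (forall y, a < y < b -> D y) -> a < x < b -> is_derive F x (F' x).
Proof.
  intros HD HDab Hx. apply is_derive_Reals. intros e He.
  specialize (HD x (HDab x Hx)).
  apply (proj1 (filterlim_locally _ _)) with (eps := mkposreal e He) in HD.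
  destruct HD as [d Hd].
  assert (Hd' : 0 < Rmin d (Rmin (x-a) (b-x))).
  { apply Rmin_pos; [apply cond_pos| apply Rmin_pos; lra]. }
  exists (mkposreal _ Hd'). intros h Hh0 Hh. simpl in Hh.
  assert (Hm1 := Rmin_l d (Rmin (x-a) (b-x))).
  assert (Hm2 := Rmin_r d (Rmin (x-a) (b-x))).
  assert (Hm3 := Rmin_l (x-a) (b-x)). assert (Hm4 := Rmin_r (x-a) (b-x)).
  specialize (Hd (x+h)). 
  assert (Hb : ball x d (x+h)). { apply ballR. replace (x+h-x) with h by ring. lra. }
  specialize (Hd Hb). 
  assert (HDy : D (x+h) /\ x + h <> x).
  { split. apply HDab. split; apply Rabs_def2 in Hh; lra. lra. }
  specialize (Hd HDy). apply ballR in Hd. simpl in Hd.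
  replace (x+h-x) with h in Hd by ring. exact Hd.
Qed.

Lemma dw_cont D (F F' : R -> R) x : deriv_within D F F' -> D x ->
  forall e, 0 < e -> exists d, 0 < d /\ forall y, D y -> Rabs (y - x) < d -> Rabs (F y - F x) < e.
Proof.
  intros HD Hx e He. specialize (HD x Hx).
  apply (proj1 (filterlim_locally _ _)) with (eps := mkposreal 1 Rlt_0_1) in HD.
  destruct HD as [d Hd].
  set (K := Rabs (F' x) + 1).
  assert (HK : 0 < K) by (unfold K; pose proof (Rabs_pos (F' x)); lra).
  exists (Rmin d (e / K)). split.
  { apply Rmin_pos; [apply cond_pos| apply Rdiv_lt_0_compat; lra]. }
  intros y Hy Hyx.
  destruct (Req_dec y x) as [->|Hne]. { replace (F x - F x) with 0 by ring; rewrite Rabs_R0; lra. }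
  assert (Hb : ball x d y). { apply ballR. pose proof (Rmin_l d (e/K)). lra. }
  specialize (Hd y Hb (conj Hy Hne)). apply ballR in Hd.
  assert (Hd1 : Rabs ((F y - F x) / (y - x) - F' x) < 1) by exact Hd.
  assert (Hq : Rabs ((F y - F x) / (y - x)) <= K).
  { unfold K. replace ((F y - F x) / (y - x)) with (((F y - F x) / (y - x) - F' x) + F' x) by ring.
    eapply Rle_trans; [apply Rabs_triang|]. lra. }
  replace (F y - F x) with ((F y - F x) / (y - x) * (y - x)) by (field; lra).
  rewrite Rabs_mult.
  assert (Hyx' : Rabs (y - x) < e / K) by (pose proof (Rmin_r d (e/K)); lra).
  assert (0 <= Rabs (y-x)) by apply Rabs_pos.
  apply Rle_lt_trans with (K * Rabs (y - x)).
  { apply Rmult_le_compat_r; auto. }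
  apply Rlt_le_trans with (K * (e / K)). { apply Rmult_lt_compat_l; lra. }
  right; field; lra.
Qed.

Lemma cw_cont D (F : R -> R) x : continuous_within D F -> D x ->
  forall e, 0 < e -> exists d, 0 < d /\ forall y, D y -> Rabs (y - x) < d -> Rabs (F y - F x) < e.
Proof.
  intros HC Hx e He. specialize (HC x Hx).
  apply (proj1 (filterlim_locally _ _)) with (eps := mkposreal e He) in HC.
  destruct HC as [d Hd]. exists d. split; [apply cond_pos|].
  intros y Hy Hyx. specialize (Hd y). apply ballR in Hyx.
  specialize (Hd Hyx Hy). apply ballR in Hd. exact Hd.
Qed.

Definition clamp (a b x : R) := Rmax a (Rmin b x).

Lemma clamp_in a b x : a <= b -> a <= clamp a b x <= b.
Proof. intros H; unfold clamp, Rmax, Rmin; repeat destruct Rle_dec; lra. Qed.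

Lemma clamp_lip a b x y : a <= b -> Rabs (clamp a b x - clamp a b y) <= Rabs (x - y).
Proof.
  intros H; unfold clamp, Rmax, Rmin; repeat destruct Rle_dec;
  unfold Rabs; repeat destruct Rcase_abs; lra.
Qed.

Lemma clamp_id a b x : a <= x <= b -> clamp a b x = x.
Proof. intros H; unfold clamp, Rmax, Rmin; repeat destruct Rle_dec; lra. Qed.

Lemma evt_max (F : R -> R) a b : a <= b ->
  (forall x, a <= x <= b -> forall e, 0 < e -> exists d, 0 < d /\
      forall y, a <= y <= b -> Rabs (y - x) < d -> Rabs (F y - F x) < e) ->
  exists M, forall x, a <= x <= b -> F x <= M.
Proof.
  intros Hab HC.
  set (G := fun x => F (clamp a b x)).
  destruct (continuity_ab_maj G a b Hab) as [Mx [HM _]].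
  - intros c Hc. apply continuity_pt_filterlim. apply filterlim_locally.
    intros eps. destruct (HC (clamp a b c) (clamp_in a b c Hab) eps (cond_pos eps)) as [d [Hd Hd']].
    exists (mkposreal d Hd). intros y Hy. apply ballR in Hy. apply ballR. simpl in Hy.
    unfold G. apply Hd'. apply clamp_in; auto.
    eapply Rle_lt_trans; [apply clamp_lip; auto|]. exact Hy.
  - exists (G Mx). intros x Hx. specialize (HM x Hx). unfold G in HM. rewrite clamp_id in HM; auto.
Qed.

Lemma fermat (F : R -> R) a b c l : a < c < b -> is_derive F c l ->
  (forall x, a < x < b -> F x <= F c) -> l = 0.
Proof.
  intros Hc Hd Hmax. apply is_derive_Reals in Hd.
  pose (pr := exist (fun l => derivable_pt_lim F c l) l Hd : derivable_pt F c).
  change l with (derive_pt F c pr).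
  apply (deriv_maximum F a b c pr); try lra. intros x H1 H2; apply Hmax; lra.
Qed.

Lemma dw_Ici t0 (F F' : R -> R) x : deriv_within (Ici t0) F F' -> t0 < x -> is_derive F x (F' x).
Proof. intros H Hx. apply (dw_int (Ici t0) F F' t0 (x+1)); auto. intros; unfold Ici; lra. lra. Qed.

Lemma dw_Icc (F F' : R -> R) x : deriv_within (Icc 0 1) F F' -> 0 < x < 1 -> is_derive F x (F' x).
Proof. intros H Hx. apply (dw_int (Icc 0 1) F F' 0 1); auto. intros; unfold Icc; lra. Qed.

Lemma dplus (f g : R -> R) x df dg : is_derive f x df -> is_derive g x dg ->
  is_derive (fun y => f y + g y) x (df + dg).
Proof. intros. apply (is_derive_plus f g); auto. Qed.
Lemma dminus (f g : R -> R) x df dg : is_derive f x df -> is_derive g x dg ->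
  is_derive (fun y => f y - g y) x (df - dg).
Proof. intros. apply (is_derive_minus f g); auto. Qed.
Lemma dmult (f g : R -> R) x df dg : is_derive f x df -> is_derive g x dg ->
  is_derive (fun y => f y * g y) x (df * g x + f x * dg).
Proof. intros. apply (is_derive_mult f g); auto. intros; apply Rmult_comm. Qed.
Lemma dopp (f : R -> R) x df : is_derive f x df -> is_derive (fun y => - f y) x (- df).
Proof. intros. apply (is_derive_opp f); auto. Qed.
Lemma dcomp (f g : R -> R) x df dg : is_derive f (g x) df -> is_derive g x dg ->
  is_derive (fun y => f (g y)) x (dg * df).
Proof. intros. apply (is_derive_comp f g); auto. Qed.
Lemma did x : is_derive (fun y : R => y) x 1.
Proof. apply (is_derive_id (K := R_AbsRing)). Qed.
Lemma dconst (c : R) x : is_derive (fun _ : R => c) x 0.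
Proof. apply (is_derive_const (K := R_AbsRing) (V := R_NormedModule)). Qed.
Lemma dln (f : R -> R) x df : is_derive f x df -> 0 < f x -> is_derive (fun y => ln (f y)) x (df / f x).
Proof. intros. eapply der_eq. apply dcomp. apply is_derive_ln. auto. eauto. field. lra. Qed.
Lemma dexp (f : R -> R) x df : is_derive f x df -> is_derive (fun y => exp (f y)) x (df * exp (f x)).
Proof. intros. apply dcomp; auto. apply is_derive_exp. Qed.
Lemma dsqrt (f : R -> R) x df : is_derive f x df -> 0 < f x ->
  is_derive (fun y => sqrt (f y)) x (df / (2 * sqrt (f x))).
Proof. intros. apply (is_derive_sqrt f); auto. Qed.
Lemma dpow2 (f : R -> R) x df : is_derive f x df -> is_derive (fun y => f y ^ 2) x (2 * f x * df).
Proof. intros. eapply der_eq. apply (is_derive_pow f 2); eauto. simpl. ring. Qed.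
Lemma dscal (f : R -> R) x k df : is_derive f x df -> is_derive (fun y => k * f y) x (k * df).
Proof. intros. apply is_derive_scal; auto. Qed.

Ltac rsimpl := unfold scal, mult, plus, opp, minus, one, zero; simpl; unfold mult, plus, opp, one, zero; simpl.

Lemma fg_rel (f f1 f2 g1 g2 : R -> R) t0 :
  C2_with (Ici t0) f f1 f2 ->
  deriv_within (Ici t0) (fun t => ln (f t)) g1 ->
  deriv_within (Ici t0) g1 g2 ->
  (forall t, t0 <= t -> 0 < f t) ->
  forall t, t0 < t -> f1 t = f t * g1 t /\ f2 t = f1 t * g1 t + f t * g2 t.
Proof.
  intros [Hd1 [Hd2 _]] Hg1 Hg2 Hfp.
  assert (Hint : forall t y, t0 < t -> t0 < y < t + 1 -> Ici t0 y) by (intros; unfold Ici; lra).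
  assert (Rel1 : forall t, t0 < t -> f1 t = f t * g1 t).
  { intros t Ht.
    assert (A1 : is_derive (fun s => ln (f s)) t (g1 t)) by (apply dw_Ici with t0; auto).
    assert (A2 : is_derive f t (f1 t)) by (apply dw_Ici with t0; auto).
    assert (A3 : is_derive (fun s => ln (f s)) t (f1 t / f t)).
    { eapply der_eq. apply (is_derive_comp ln f). apply is_derive_ln. apply Hfp; lra. exact A2.
      rsimpl. field. specialize (Hfp t); lra. }
    apply is_derive_unique in A1. apply is_derive_unique in A3. rewrite A1 in A3.
    assert (0 < f t) by (apply Hfp; lra).
    rewrite A3. field. lra. }
  intros t Ht. split. apply Rel1; auto.
  assert (A1 : is_derive g1 t (g2 t)) by (apply dw_Ici with t0; auto).
  assert (A2 : is_derive f t (f1 t)) by (apply dw_Ici with t0; auto).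
  assert (A4 : is_derive f1 t (f2 t)) by (apply dw_Ici with t0; auto).
  assert (Hft : 0 < f t) by (apply Hfp; lra).
  assert (A5 : is_derive g1 t ((f2 t * f t - f1 t * f1 t) / f t ^ 2)).
  { apply is_derive_ext_loc with (f := fun s => f1 s / f s).
    - assert (He : 0 < t - t0) by lra. exists (mkposreal _ He). intros y Hy.
      apply ballR in Hy. assert (Hy' : Rabs (y - t) < t - t0) by exact Hy. apply Rabs_def2 in Hy'.
      change (@eq R (f1 y / f y) (g1 y)). rewrite (Rel1 y) by lra. field. assert (0 < f y) by (apply Hfp; lra). lra.
    - apply is_derive_div; auto. lra. }
  apply is_derive_unique in A1. apply is_derive_unique in A5. rewrite A1 in A5.
  rewrite A5, (Rel1 t Ht). field. lra.
Qed.



Lemma fg_mono (f f1 f2 g1 g2 : R -> R) t0 :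
  C2_with (Ici t0) f f1 f2 ->
  deriv_within (Ici t0) (fun t => ln (f t)) g1 ->
  deriv_within (Ici t0) g1 g2 ->
  (forall t, t0 <= t -> 0 < f t) ->
  (forall t, t0 <= t -> 0 < g1 t) ->
  (forall t, t0 <= t -> 0 < g2 t) ->
  forall s t, t0 < s <= t ->
    g1 s <= g1 t /\ f s <= f t /\ f1 s <= f1 t /\
    ln (f s) + g1 s * (t - s) <= ln (f t) /\
    ln (f t) - ln (f s) <= g1 t * (t - s).
Proof.
  intros Hf2 Hg1 Hg2 Hfp Hg1p Hg2p s t Hst.
  pose proof (fg_rel f f1 f2 g1 g2 t0 Hf2 Hg1 Hg2 Hfp) as Rel.
  destruct Hf2 as [Hd1 [Hd2 _]].
  assert (Dg1 : forall x, s <= x <= t -> is_derive g1 x (g2 x)) by (intros; apply dw_Ici with t0; auto; lra).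
  assert (Df : forall x, s <= x <= t -> is_derive f x (f1 x)) by (intros; apply dw_Ici with t0; auto; lra).
  assert (Df1 : forall x, s <= x <= t -> is_derive f1 x (f2 x)) by (intros; apply dw_Ici with t0; auto; lra).
  assert (Dl : forall x, s <= x <= t -> is_derive (fun y => ln (f y)) x (g1 x)) by (intros; apply dw_Ici with t0; auto; lra).
  assert (M1 : forall a b, s <= a <= b -> b <= t -> g1 a <= g1 b).
  { intros a b Ha Hb. apply (mono g1 g2). lra. intros x Hx. split. apply Dg1; lra. left; apply Hg2p; lra. }
  split; [apply M1; lra|].
  split. { apply (mono f f1). lra. intros x Hx. split. apply Df; lra.
    rewrite (proj1 (Rel x ltac:(lra))). left; apply Rmult_lt_0_compat; [apply Hfp|apply Hg1p]; lra. }
  split. { apply (mono f1 f2). lra. intros x Hx. split. apply Df1; lra.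
    rewrite (proj2 (Rel x ltac:(lra))), (proj1 (Rel x ltac:(lra))).
    assert (0 < f x) by (apply Hfp; lra). assert (0 < g1 x) by (apply Hg1p; lra).
    assert (0 < g2 x) by (apply Hg2p; lra). left. nra. }
  split.
  { pose (F := fun y => ln (f y) - g1 s * y).
    assert (F s <= F t).
    { apply (mono F (fun y => g1 y - g1 s)). lra. intros x Hx. split.
      - unfold F. eapply der_eq. apply dminus. apply Dl; lra.
        apply dscal. apply did. rsimpl. ring.
      - assert (g1 s <= g1 x) by (apply M1; lra). lra. }
    unfold F in H. lra. }
  { pose (F := fun y => g1 t * y - ln (f y)).
    assert (F s <= F t).
    { apply (mono F (fun y => g1 t - g1 y)). lra. intros x Hx. split.
      - unfold F. eapply der_eq. apply dminus.
        apply dscal. apply did. apply Dl; lra. rsimpl. ring.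
      - assert (g1 x <= g1 t) by (apply M1; lra). lra. }
    unfold F in H. lra. }
Qed.

Lemma lng1_bound (f f1 f2 g1 g2 : R -> R) t0 eps :
  C2_with (Ici t0) f f1 f2 ->
  deriv_within (Ici t0) (fun t => ln (f t)) g1 ->
  deriv_within (Ici t0) g1 g2 ->
  (forall t, t0 <= t -> 0 < g1 t) ->
  forall s t, t0 < s <= t -> (forall x, s <= x <= t -> g2 x <= eps * g1 x ^ 2) ->
    ln (g1 t) - ln (g1 s) <= eps * (ln (f t) - ln (f s)).
Proof.
  intros Hf2 Hg1 Hg2 Hg1p s t Hst Heps.
  assert (Dg1 : forall x, s <= x <= t -> is_derive g1 x (g2 x)) by (intros; apply dw_Ici with t0; auto; lra).
  assert (Dl : forall x, s <= x <= t -> is_derive (fun y => ln (f y)) x (g1 x)) by (intros; apply dw_Ici with t0; auto; lra).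
  pose (F := fun y => eps * ln (f y) - ln (g1 y)).
  assert (F s <= F t).
  { apply (mono F (fun y => eps * g1 y - g2 y / g1 y)). lra. intros x Hx.
    assert (0 < g1 x) by (apply Hg1p; lra). split.
    - unfold F. eapply der_eq. apply dminus.
      apply dscal. apply Dl; lra.
      apply dln. apply Dg1; lra. auto.
      rsimpl. field. lra.
    - specialize (Heps x Hx).
      assert (g2 x / g1 x <= eps * g1 x).
      { apply Rmult_le_reg_r with (g1 x); auto. field_simplify; [|lra]. nra. }
      lra. }
  unfold F in H. lra.
Qed.

Lemma from0 (G G' : R -> R) r L0 : 0 < r ->
  (forall t, 0 < t <= r -> is_derive G t (G' t) /\ 0 <= G' t) ->
  (forall e, 0 < e -> exists d, 0 < d /\ forall t, 0 < t < d -> L0 - e <= G t) ->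
  L0 <= G r.
Proof.
  intros Hr HD Hlim. apply Rle_plus_epsilon. intros e He.
  destruct (Hlim e He) as [d [Hd Hd']].
  set (t := Rmin d r / 2).
  assert (Ht : 0 < t < d /\ t <= r).
  { unfold t. pose proof (Rmin_l d r). pose proof (Rmin_r d r).
    assert (0 < Rmin d r) by (apply Rmin_pos; lra). lra. }
  assert (G t <= G r). { apply (mono G G'). lra. intros x Hx. apply HD. lra. }
  specialize (Hd' t (proj1 Ht)). lra.
Qed.

Lemma u_basic (h f : R -> R) (U U1 U2 : R -> R) L M :
  C2_with (Icc 0 1) U U1 U2 ->
  (forall r, 0 < r < 1 -> - U2 r - / r * U1 r = L * h r * f (U r)) ->
  (forall r, 0 < r < 1 -> 0 < U r) ->
  U 0 = M -> U1 0 = 0 -> 0 < L ->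
  (forall r, 0 <= r <= 1 -> 0 < h r) ->
  (forall t, 0 <= t -> 0 <= f t) ->
  (forall r, 0 < r < 1 -> is_derive U r (U1 r) /\ is_derive U1 r (U2 r) /\
      U1 r + r * U2 r = - (r * L * h r * f (U r))) /\
  (forall e, 0 < e -> exists d, 0 < d /\ forall t, 0 < t < d -> Rabs (U t - M) < e /\ Rabs (U1 t) < e) /\
  (forall r, 0 < r < 1 -> U1 r <= 0 /\ U r <= M).
Proof.
  intros [HdU [HdU1 _]] Hode Hpos HU0 HU10 HL Hh Hf.
  assert (D : forall r, 0 < r < 1 -> is_derive U r (U1 r) /\ is_derive U1 r (U2 r) /\
      U1 r + r * U2 r = - (r * L * h r * f (U r))).
  { intros r Hr. split; [apply dw_Icc; auto|]. split; [apply dw_Icc; auto|].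
    specialize (Hode r Hr). 
    replace (U1 r + r * U2 r) with (- r * (- U2 r - / r * U1 r)) by (field; lra).
    rewrite Hode. ring. }
  assert (Lim : forall e, 0 < e -> exists d, 0 < d /\ forall t, 0 < t < d -> Rabs (U t - M) < e /\ Rabs (U1 t) < e).
  { intros e He.
    assert (I0 : Icc 0 1 0) by (unfold Icc; lra).
    destruct (dw_cont _ _ _ 0 HdU I0 e He) as [d1 [Hd1 H1]].
    destruct (dw_cont _ _ _ 0 HdU1 I0 e He) as [d2 [Hd2 H2]].
    exists (Rmin 1 (Rmin d1 d2)). split. { apply Rmin_pos; [lra| apply Rmin_pos; lra]. }
    intros t Ht. pose proof (Rmin_l 1 (Rmin d1 d2)). pose proof (Rmin_r 1 (Rmin d1 d2)).
    pose proof (Rmin_l d1 d2). pose proof (Rmin_r d1 d2).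
    assert (It : Icc 0 1 t) by (unfold Icc; lra).
    assert (Rabs (t - 0) < d1) by (rewrite Rminus_0_r, Rabs_pos_eq; lra).
    assert (Rabs (t - 0) < d2) by (rewrite Rminus_0_r, Rabs_pos_eq; lra).
    split. rewrite <- HU0. apply H1; auto. replace (U1 t) with (U1 t - U1 0) by (rewrite HU10; ring). apply H2; auto. }
  split; [exact D|]. split; [exact Lim|].
  assert (N1 : forall r, 0 < r < 1 -> r * U1 r <= 0).
  { intros r Hr.
    assert (0 <= - (r * U1 r)); [|lra].
    apply (from0 (fun t => - (t * U1 t)) (fun t => t * L * h t * f (U t)) r 0). lra.
    - intros t Ht. destruct (D t ltac:(lra)) as [_ [D2 D3]]. split.
      + eapply der_eq. apply dopp. apply dmult. apply did. exact D2. lra.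
      + assert (0 < h t) by (apply Hh; lra). assert (0 <= f (U t)) by (apply Hf; left; apply Hpos; lra).
        apply Rmult_le_pos; [|auto]. apply Rmult_le_pos; [|lra]. apply Rmult_le_pos; lra.
    - intros e He. destruct (Lim 1 Rlt_0_1) as [d [Hd Hd']]. exists (Rmin d e). split.
      apply Rmin_pos; lra. intros t Ht. pose proof (Rmin_l d e). pose proof (Rmin_r d e).
      destruct (Hd' t ltac:(lra)) as [_ Hu1].
      assert (Rabs (t * U1 t) < e). { rewrite Rabs_mult, (Rabs_pos_eq t) by lra.
        assert (0 <= Rabs (U1 t)) by apply Rabs_pos. nra. }
      apply Rabs_def2 in H1. lra. }
  assert (N2 : forall r, 0 < r < 1 -> U1 r <= 0).
  { intros r Hr. specialize (N1 r Hr). nra. }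
  intros r Hr. split; [auto|].
  assert (-M <= - U r); [|lra].
  apply (from0 (fun t => - U t) (fun t => - U1 t) r (-M)). lra.
  - intros t Ht. split. apply dopp. apply D; lra. assert (U1 t <= 0) by (apply N2; lra). lra.
  - intros e He. destruct (Lim e He) as [d [Hd Hd']]. exists d. split; auto.
    intros t Ht. destruct (Hd' t Ht) as [H1 _]. apply Rabs_def2 in H1. lra.
Qed.

Lemma u_apri (h f U U1 U2 : R -> R) L M Hb :
  (forall r, 0 < r < 1 -> is_derive U r (U1 r) /\ is_derive U1 r (U2 r) /\
      U1 r + r * U2 r = - (r * L * h r * f (U r))) ->
  (forall e, 0 < e -> exists d, 0 < d /\ forall t, 0 < t < d -> Rabs (U t - M) < e /\ Rabs (U1 t) < e) ->
  (forall r, 0 < r < 1 -> U1 r <= 0 /\ U r <= M) ->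
  (forall r, 0 < r < 1 -> 0 < U r) -> 0 < L ->
  (forall t, 0 <= t -> 0 <= f t) -> (forall t, 0 < t < 1 -> 0 < h t) ->
  (forall s, 0 <= s <= M -> f s <= f M) ->
  forall r, 0 < r < 1 -> (forall t, 0 < t <= r -> h t <= Hb) ->
  - (r * U1 r) <= L * Hb * f M * r ^ 2 / 2 /\ M - U r <= L * Hb * f M * r ^ 2 / 4.
Proof.
  intros D Lim Mon Hpos HL Hf Hh Hfm r Hr Hhb.
  set (c := L * Hb * f M).
  assert (A1 : forall s, 0 < s <= r -> - (s * U1 s) <= c * s ^ 2 / 2).
  { intros s Hs.
    assert (0 <= s * U1 s + c / 2 * s ^ 2); [|lra].
    apply (from0 (fun t => t * U1 t + c / 2 * t ^ 2) (fun t => t * (c - L * h t * f (U t))) s 0). lra.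
    - intros t Ht. destruct (D t ltac:(lra)) as [_ [D2 D3]]. split.
      + eapply der_eq. apply dplus. apply dmult. apply did. exact D2.
        apply dscal. apply dpow2. apply did. 
        cbv beta. lra.
      + cbv beta. apply Rmult_le_pos; [lra|]. unfold c.
        assert (h t <= Hb) by (apply Hhb; lra).
        destruct (Mon t ltac:(lra)) as [_ HU]. assert (HUp := Hpos t ltac:(lra)).
        assert (f (U t) <= f M) by (apply Hfm; lra).
        assert (0 <= f (U t)) by (apply Hf; lra).
        assert (L * h t * f (U t) <= L * Hb * f (U t)).
        { apply Rmult_le_compat_r; auto. apply Rmult_le_compat_l; lra. }
        assert (L * Hb * f (U t) <= L * Hb * f M).
        { apply Rmult_le_compat_l; auto. apply Rmult_le_pos. lra.
          apply Rle_trans with (h t); [|auto]. left; apply Hh; lra. }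
        lra.
    - intros e He. destruct (Lim 1 Rlt_0_1) as [d [Hd Hd']].
      assert (0 <= c).
      { unfold c. assert (0 < h r) by (apply Hh; lra). assert (h r <= Hb) by (apply Hhb; lra).
        destruct (Mon r Hr). assert (0 < U r) by (apply Hpos; lra).
        assert (0 <= f M) by (apply Hf; lra). apply Rmult_le_pos; auto. apply Rmult_le_pos; lra. }
      exists (Rmin d (Rmin e 1)). split. apply Rmin_pos; [lra|apply Rmin_pos; lra].
      intros t Ht. pose proof (Rmin_l d (Rmin e 1)). pose proof (Rmin_r d (Rmin e 1)).
      pose proof (Rmin_l e 1). pose proof (Rmin_r e 1).
      destruct (Hd' t ltac:(lra)) as [_ Hu1]. apply Rabs_def2 in Hu1.
      assert (0 <= c / 2 * t ^ 2) by (apply Rmult_le_pos; [lra| apply pow2_ge_0]).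
      assert (t * U1 t >= - t) by nra. lra. }
  split; [apply A1; lra|].
  assert (0 <= U r - M + c / 4 * r ^ 2); [|lra].
  apply (from0 (fun t => U t - M + c / 4 * t ^ 2) (fun t => U1 t + c / 2 * t) r 0). lra.
  - intros t Ht. destruct (D t ltac:(lra)) as [D1 _]. split.
    + eapply der_eq. apply dplus. apply dminus. exact D1. apply dconst.
      apply dscal. apply dpow2. apply did. cbv beta. field.
    + cbv beta. specialize (A1 t Ht).
      assert (- U1 t <= c * t / 2); [|lra].
      apply Rmult_le_reg_l with t. lra. nra.
  - intros e He. destruct (Lim e He) as [d [Hd Hd']]. exists (Rmin d 1). split.
    apply Rmin_pos; lra. intros t Ht. pose proof (Rmin_l d 1). pose proof (Rmin_r d 1).
    destruct (Hd' t ltac:(lra)) as [Hu _]. apply Rabs_def2 in Hu.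
    assert (0 <= c).
    { unfold c. assert (0 < h r) by (apply Hh; lra). assert (h r <= Hb) by (apply Hhb; lra).
      destruct (Mon r Hr). assert (0 < U r) by (apply Hpos; lra).
      assert (0 <= f M) by (apply Hf; lra). apply Rmult_le_pos; auto. apply Rmult_le_pos; lra. }
    assert (0 <= c / 4 * t ^ 2) by (apply Rmult_le_pos; [lra| apply pow2_ge_0]). lra.
Qed.

Lemma exp_le_mono x y : x <= y -> exp x <= exp y.
Proof. intros [H|H]; [left; apply exp_increasing; auto| subst; lra]. Qed.

Lemma exp5 : exp 5 <= 243.
Proof.
  replace 5 with (1+1+1+1+1) by ring. rewrite !exp_plus.
  pose proof exp_le_3. pose proof (exp_pos 1).
  assert (exp 1 * exp 1 <= 9) by nra.
  assert (exp 1 * exp 1 * exp 1 <= 27) by nra.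
  assert (exp 1 * exp 1 * exp 1 * exp 1 <= 81) by nra. nra.
Qed.

Lemma div_le X Y c : 0 < Y -> X <= c * Y -> X / Y <= c.
Proof. intros. apply Rmult_le_reg_r with Y; auto. field_simplify; lra. Qed.
Lemma le_div X Y c : 0 < Y -> c * Y <= X -> c <= X / Y.
Proof. intros. apply Rmult_le_reg_r with Y; auto. field_simplify; lra. Qed.

Lemma core_pt (h h1 f f1 f2 g1 g2 U U1 U2 : R -> R) (t0 T L M R eps : R) :
  (forall t, t0 < t -> f1 t = f t * g1 t /\ f2 t = f1 t * g1 t + f t * g2 t) ->
  (forall t, t0 <= t -> 0 < f t) -> (forall t, t0 <= t -> 0 < g1 t) ->
  (forall s t, t0 < s <= t -> g1 s <= g1 t /\ f s <= f t /\ f1 s <= f1 t /\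
      ln (f s) + g1 s * (t - s) <= ln (f t) /\ ln (f t) - ln (f s) <= g1 t * (t - s)) ->
  (forall s, T <= s <= M -> ln (g1 M) - ln (g1 s) <= eps * (ln (f M) - ln (f s))) ->
  t0 < T -> t0 < M -> T <= M - 5 / g1 M ->
  (forall r, 0 < r < 1 -> U1 r <= 0 /\ U r <= M) ->
  (forall r, 0 < r <= R -> 9/10 * h 0 <= h r <= 11/10 * h 0) -> 0 < h 0 ->
  (forall r, 0 < r <= R -> - (r * U1 r) <= L * (11/10 * h 0) * f M * r ^ 2 / 2 /\
                          M - U r <= L * (11/10 * h 0) * f M * r ^ 2 / 4) ->
  0 < R < 1 -> L * h 0 * f1 M * R ^ 2 <= 16 -> 0 < L -> 0 < eps <= 1/100 ->
  forall r, 0 < r <= R ->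
    T <= U r /\ M - U r <= 5 / g1 M /\
    0 <= ln (f M) - ln (f (U r)) <= 11/10 * (L * h 0 * f1 M) * r ^ 2 / 4 /\
    0 <= ln (g1 M) - ln (g1 (U r)) <= 5 * eps /\
    0 <= - (r * g1 (U r) * U1 r) <= 11/10 * (L * h 0 * f1 M) * r ^ 2 / 2 /\
    0 <= L * r ^ 2 * h r * f1 (U r) <= 11/10 * (L * h 0 * f1 M) * r ^ 2 /\
    L * r ^ 2 * h r * f1 (U r) = (L * h 0 * f1 M) * r ^ 2 * (h r * f1 (U r) / (h 0 * f1 M)) /\
    1/270 <= h r * f1 (U r) / (h 0 * f1 M) <= 11/10.
Proof.
  intros Hrel Hfp Hg1p Hmono Hlng HT HM HTM Mon Hhb Hh0 Hapri HR HLR HL Heps r Hr.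
  assert (HgM : 0 < g1 M) by (apply Hg1p; lra).
  assert (HfM : 0 < f M) by (apply Hfp; lra).
  destruct (Hrel M HM) as [Hf1M _].
  set (Lam := L * h 0 * f1 M).
  assert (HLam : 0 < Lam) by (unfold Lam; rewrite Hf1M; apply Rmult_lt_0_compat; [apply Rmult_lt_0_compat|apply Rmult_lt_0_compat]; lra).
  assert (Hr2 : Lam * r ^ 2 <= 16).
  { apply Rle_trans with (Lam * R ^ 2); [|exact HLR]. apply Rmult_le_compat_l; [lra|]. 
    apply pow_incr; lra. }
  assert (Hr2p : 0 <= r ^ 2) by apply pow2_ge_0.
  destruct (Hapri r Hr) as [A1 A2].
  assert (E1 : L * (11/10 * h 0) * f M * r ^ 2 = 11/10 * Lam * r ^ 2 / g1 M).
  { unfold Lam. rewrite Hf1M. field. lra. }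
  rewrite E1 in A1, A2.
  assert (HMU : M - U r <= 5 / g1 M).
  { apply Rle_trans with (11/10 * Lam * r ^ 2 / g1 M / 4); [exact A2|].
    unfold Rdiv. rewrite Rmult_assoc. rewrite (Rmult_comm (/ g1 M)). rewrite <- Rmult_assoc.
    apply Rmult_le_compat_r. left; apply Rinv_0_lt_compat; lra. nra. }
  assert (HUT : T <= U r) by lra.
  assert (HUt0 : t0 < U r) by lra.
  destruct (Mon r ltac:(lra)) as [HU1 HUM].
  destruct (Hmono (U r) M ltac:(lra)) as [Mg1 [Mf [Mf1 [_ Mln]]]].
  assert (HfU : 0 < f (U r)) by (apply Hfp; lra).
  assert (Hg1U : 0 < g1 (U r)) by (apply Hg1p; lra).
  destruct (Hrel (U r) HUt0) as [Hf1U _].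
  assert (Gam0 : 0 <= ln (f M) - ln (f (U r))).
  { destruct Mf as [Mf|Mf]. assert (ln (f (U r)) < ln (f M)) by (apply ln_increasing; lra). lra.
    rewrite Mf; lra. }
  assert (Gam1 : ln (f M) - ln (f (U r)) <= 11/10 * Lam * r ^ 2 / 4).
  { apply Rle_trans with (g1 M * (M - U r)); [exact Mln|].
    apply Rle_trans with (g1 M * (11/10 * Lam * r ^ 2 / g1 M / 4)).
    apply Rmult_le_compat_l; lra. right; field; lra. }
  assert (Lg0 : 0 <= ln (g1 M) - ln (g1 (U r))).
  { destruct Mg1 as [Mg1|Mg1]. assert (ln (g1 (U r)) < ln (g1 M)) by (apply ln_increasing; lra). lra.
    rewrite Mg1; lra. }
  assert (Lg1 : ln (g1 M) - ln (g1 (U r)) <= 5 * eps).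
  { apply Rle_trans with (eps * (ln (f M) - ln (f (U r)))). apply Hlng; lra. nra. }
  assert (Hh : 9/10 * h 0 <= h r <= 11/10 * h 0) by (apply Hhb; lra).
  assert (Pb : 0 <= - (r * g1 (U r) * U1 r) <= 11/10 * Lam * r ^ 2 / 2).
  { replace (- (r * g1 (U r) * U1 r)) with (g1 (U r) * (- (r * U1 r))) by ring.
    assert (0 <= - (r * U1 r)) by nra. split. apply Rmult_le_pos; lra.
    apply Rle_trans with (g1 M * (11/10 * Lam * r ^ 2 / g1 M / 2)).
    apply Rmult_le_compat; lra. right; field; lra. }
  assert (Hf1Up : 0 < f1 (U r)) by (rewrite Hf1U; apply Rmult_lt_0_compat; lra).
  assert (Hf1Mp : 0 < f1 M) by (rewrite Hf1M; apply Rmult_lt_0_compat; lra).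
  assert (PhiEq : L * r ^ 2 * h r * f1 (U r) = Lam * r ^ 2 * (h r * f1 (U r) / (h 0 * f1 M))).
  { unfold Lam. field. lra. }
  assert (Xup : h r * f1 (U r) / (h 0 * f1 M) <= 11/10).
  { apply div_le. apply Rmult_lt_0_compat; lra.
    apply Rle_trans with (11/10 * h 0 * f1 (U r)). apply Rmult_le_compat_r; lra.
    replace (11 / 10 * (h 0 * f1 M)) with (11/10 * h 0 * f1 M) by ring.
    apply Rmult_le_compat_l; lra. }
  assert (Xlow : 1/270 <= h r * f1 (U r) / (h 0 * f1 M)).
  { assert (XE : h r * f1 (U r) / (h 0 * f1 M) = (h r / h 0) *
        exp (- (ln (f M) - ln (f (U r)))) * exp (- (ln (g1 M) - ln (g1 (U r))))).
    { replace (- (ln (f M) - ln (f (U r)))) with (ln (f (U r)) + - ln (f M)) by ring.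
      replace (- (ln (g1 M) - ln (g1 (U r)))) with (ln (g1 (U r)) + - ln (g1 M)) by ring.
      rewrite !exp_plus, !exp_Ropp, !exp_ln by lra. rewrite Hf1U, Hf1M. field.
      repeat split; lra. }
    rewrite XE.
    assert (Hx1 : / exp 5 <= exp (- (ln (f M) - ln (f (U r)))) * exp (- (ln (g1 M) - ln (g1 (U r))))).
    { rewrite <- exp_plus, <- exp_Ropp. apply exp_le_mono. nra. }
    assert (Hx2 : / 243 <= / exp 5).
    { apply Rinv_le_contravar. apply exp_pos. apply exp5. }
    assert (Hx3 : 9/10 <= h r / h 0).
    { apply le_div; lra. }
    assert (0 < exp (- (ln (f M) - ln (f (U r))))) by apply exp_pos.
    assert (0 < exp (- (ln (g1 M) - ln (g1 (U r))))) by apply exp_pos.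
    rewrite Rmult_assoc. nra. }
  assert (Phib : 0 <= L * r ^ 2 * h r * f1 (U r) <= 11/10 * Lam * r ^ 2).
  { rewrite PhiEq. split. apply Rmult_le_pos; [nra|lra].
    rewrite Rmult_assoc. rewrite (Rmult_comm (11/10)). rewrite Rmult_assoc.
    apply Rmult_le_compat_l. lra. nra. }
  repeat split; lra.
Qed.

Lemma core_der (h h1 f f1 f2 g1 g2 U U1 U2 : R -> R) (t0 L M r : R) :
  0 < r -> t0 < U r -> t0 < M ->
  is_derive U r (U1 r) -> is_derive U1 r (U2 r) ->
  U1 r + r * U2 r = - (r * L * h r * f (U r)) ->
  is_derive h r (h1 r) -> 0 < h r -> 0 < h 0 ->
  is_derive f (U r) (f1 (U r)) -> is_derive f1 (U r) (f2 (U r)) -> is_derive g1 (U r) (g2 (U r)) ->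
  f1 (U r) = f (U r) * g1 (U r) -> f2 (U r) = f1 (U r) * g1 (U r) + f (U r) * g2 (U r) ->
  0 < f (U r) -> 0 < g1 (U r) -> 0 < f M -> 0 < f1 M ->
  let P := fun s => s * g1 (U s) * U1 s in
  let Phi := fun s => L * s ^ 2 * h s * f1 (U s) in
  let E := fun s => P s ^ 2 / 2 + 2 * P s + Phi s in
  let X := fun s => h s * f1 (U s) / (h 0 * f1 M) in
  let G := fun s => ln (f M) - ln (f (U s)) in
  let W := fun s => exp (G s) * (X s - (1 + P s / 4) ^ 2) in
  is_derive E r ((P r + 2) * r * g2 (U r) * U1 r ^ 2 + r ^ 2 * L * h1 r * f1 (U r)
                  + r ^ 2 * L * h r * f (U r) * g2 (U r) * U1 r) /\
  is_derive W r (exp (G r) * ((1 + P r / 4) * E r / (2 * r) + X r * h1 r / h r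
                  + X r * g2 (U r) * U1 r / g1 (U r) - (1 + P r / 4) * r * g2 (U r) * U1 r ^ 2 / 2)).
Proof.
  intros Hr HUr HM DU DU1 Ode Dh Hhr Hh0 Df Df1 Dg1 R1 R2 HfU Hg1U HfM Hf1M P Phi E X G W.
  assert (HU2' : r * U2 r = - (r * L * h r * f (U r)) - U1 r) by lra.
  assert (HU2 : U2 r = (- (r * L * h r * f (U r)) - U1 r) / r) by (rewrite <- HU2'; field; lra).
  assert (DP : is_derive P r (U1 r * g1 (U r) + r * (U1 r * g2 (U r)) * U1 r + r * g1 (U r) * U2 r)).
  { unfold P. eapply der_eq. apply dmult. apply dmult. apply did. apply (dcomp g1 U). exact Dg1. exact DU.
    exact DU1. cbv beta. ring. }
  assert (DPhi : is_derive Phi r (L * (2 * r) * h r * f1 (U r) + L * r ^ 2 * h1 r * f1 (U r)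
                    + L * r ^ 2 * h r * (U1 r * f2 (U r)))).
  { unfold Phi. eapply der_eq. apply dmult. apply dmult. apply dscal. apply dpow2. apply did.
    exact Dh. apply (dcomp f1 U). exact Df1. exact DU. cbv beta. ring. }
  split.
  - unfold E. eapply der_eq. apply dplus. apply dplus. 
    apply (dmult (fun s => P s ^ 2) (fun _ => / 2)). apply dpow2. exact DP. apply dconst.
    apply dscal. exact DP. exact DPhi.
    cbv beta. rewrite HU2, R2. unfold P. rewrite R1. field. lra.
  - assert (DG : is_derive G r (0 - U1 r * f1 (U r) / f (U r))).
    { unfold G. apply dminus. apply dconst. apply (dln (fun s => f (U s))).
      apply (dcomp f U). exact Df. exact DU. exact HfU. }
    assert (DX : is_derive X r ((h1 r * f1 (U r) + h r * (U1 r * f2 (U r))) * / (h 0 * f1 M) + h r * f1 (U r) * 0)).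
    { unfold X. apply (dmult (fun s => h s * f1 (U s)) (fun _ => / (h 0 * f1 M))).
      apply (dmult h (fun s => f1 (U s))). exact Dh. apply (dcomp f1 U). exact Df1. exact DU. apply dconst. }
    unfold W. eapply der_eq. apply (dmult (fun s => exp (G s)) (fun s => X s - (1 + P s / 4) ^ 2)).
    apply dexp. exact DG. apply dminus. exact DX. apply (dpow2 (fun s => 1 + P s / 4)).
    apply dplus. apply dconst. apply (dmult P (fun _ => / 4)). exact DP. apply dconst.
    cbv beta. rewrite HU2, R2. unfold E, Phi, X, P. rewrite R1. field.
    repeat split; try lra.
Qed.

Lemma bnd_E (P Phi e eps Lam r T2 R C1h : R) : 0 < r -> 0 < Lam ->
  0 <= - P <= 11/10 * Lam * r ^ 2 / 2 -> Lam * r ^ 2 <= 16 ->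
  0 <= Phi <= 11/10 * Lam * r ^ 2 -> 0 <= e <= eps ->
  Rabs T2 <= Lam * r * (R * C1h) ->
  Rabs ((P + 2) * e * P ^ 2 / r + T2 + e * Phi * P / r) <= Lam * r * (100 * eps + R * C1h).
Proof.
  intros Hr HL HP Hr2 HPhi He HT2.
  set (p := - P / r).
  assert (HPp : P = - (r * p)) by (unfold p; field; lra).
  assert (Hp0 : 0 <= p) by (unfold p; apply Rmult_le_pos; [lra| left; apply Rinv_0_lt_compat; lra]).
  assert (Hp1 : p <= 11/20 * Lam * r).
  { apply Rmult_le_reg_l with r. lra. rewrite HPp in HP. nra. }
  assert (Hrp : r * p <= 88/10) by nra.
  assert (T1e : (P + 2) * e * P ^ 2 / r = (2 - r * p) * e * (r * p * p)) by (rewrite HPp; field; lra).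
  assert (T3e : e * Phi * P / r = - (e * Phi * p)) by (rewrite HPp; field; lra).
  rewrite T1e, T3e.
  assert (Hrpp : 0 <= r * p * p) by (apply Rmult_le_pos; nra).
  assert (Hrpp2 : r * p * p <= 88/10 * (11/20 * Lam * r)) by (apply Rmult_le_compat; nra).
  assert (B1 : Rabs ((2 - r * p) * e * (r * p * p)) <= 34 * eps * Lam * r).
  { replace ((2 - r * p) * e * (r * p * p)) with ((2 - r * p) * (e * (r * p * p))) by ring.
    rewrite Rabs_mult, (Rabs_pos_eq (e * (r * p * p))) by nra.
    assert (Rabs (2 - r * p) <= 7) by (apply Rabs_le; lra).
    assert (e * (r * p * p) <= eps * (88/10 * (11/20 * Lam * r))) by (apply Rmult_le_compat; nra).
    assert (0 <= e * (r * p * p)) by nra.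
    apply Rle_trans with (7 * (e * (r * p * p))). apply Rmult_le_compat_r; lra. lra. }
  assert (B3 : Rabs (- (e * Phi * p)) <= 10 * eps * Lam * r).
  { assert (0 <= e * Phi) by (apply Rmult_le_pos; lra).
    assert (0 <= e * Phi * p) by (apply Rmult_le_pos; lra).
    rewrite Rabs_Ropp, Rabs_pos_eq by lra.
    assert (Phi <= 176/10) by lra.
    assert (e * Phi <= eps * (176/10)) by (apply Rmult_le_compat; lra).
    apply Rle_trans with (eps * (176/10) * p). apply Rmult_le_compat_r; lra.
    apply Rle_trans with (eps * (176/10) * (11/20 * Lam * r)).
    apply Rmult_le_compat_l; nra. assert (0 <= eps * Lam * r) by (apply Rmult_le_pos; [apply Rmult_le_pos|]; lra). lra. }
  eapply Rle_trans. apply Rabs_triang. eapply Rle_trans. apply Rplus_le_compat_r. apply Rabs_triang.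
  assert (0 <= eps * Lam * r) by (apply Rmult_le_pos; [apply Rmult_le_pos|]; lra). lra.
Qed.

Lemma bnd_W (P X E e eps Lam r hr h1r h0 C1 R : R) : 0 < r <= R -> 0 < Lam ->
  0 <= - P <= 11/10 * Lam * r ^ 2 / 2 -> Lam * r ^ 2 <= 16 ->
  0 <= X <= 11/10 -> 0 <= e <= eps -> 0 <= C1 -> 0 < h0 ->
  Rabs E <= Lam * (100 * eps + R * (C1 / h0)) * r ^ 2 / 2 ->
  9/10 * h0 <= hr -> Rabs h1r <= C1 ->
  Rabs ((1 + P / 4) * E / (2 * r) + X * h1r / hr + X * e * P / r - (1 + P / 4) * e * P ^ 2 / (2 * r))
    <= Lam * (100 * eps + R * (C1 / h0)) * r / 2 + 2 * (C1 / h0).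
Proof.
  intros Hr HL HP Hr2 HX He HC1 Hh0 HE Hhr Hh1.
  set (dl := 100 * eps + R * (C1 / h0)) in *.
  assert (Hch : 0 <= C1 / h0) by (apply Rmult_le_pos; [lra| left; apply Rinv_0_lt_compat; lra]).
  assert (Hdl : 100 * eps <= dl) by (unfold dl; assert (0 <= R * (C1/h0)) by (apply Rmult_le_pos; lra); lra).
  set (p := - P / r).
  assert (HPp : P = - (r * p)) by (unfold p; field; lra).
  assert (Hp0 : 0 <= p) by (unfold p; apply Rmult_le_pos; [lra| left; apply Rinv_0_lt_compat; lra]).
  assert (Hp1 : p <= 11/20 * Lam * r).
  { apply Rmult_le_reg_l with r. lra. rewrite HPp in HP. nra. }
  assert (Hrp : r * p <= 88/10) by nra.
  assert (Hy : Rabs (1 + P / 4) <= 12/10) by (apply Rabs_le; lra).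
  assert (HLr : 0 <= Lam * r) by nra.
  assert (T1 : Rabs ((1 + P / 4) * E / (2 * r)) <= 3/10 * Lam * dl * r).
  { unfold Rdiv. rewrite !Rabs_mult, Rabs_inv, (Rabs_pos_eq (2 * r)) by lra.
    assert (0 <= Rabs E) by apply Rabs_pos.
    apply Rle_trans with (12/10 * (Lam * dl * r ^ 2 / 2) * / (2 * r)).
    apply Rmult_le_compat_r. left; apply Rinv_0_lt_compat; lra.
    apply Rmult_le_compat; try lra. apply Rabs_pos.
    right. field. lra. }
  assert (T2 : Rabs (X * h1r / hr) <= 2 * (C1 / h0)).
  { unfold Rdiv. rewrite !Rabs_mult, Rabs_inv, (Rabs_pos_eq hr), (Rabs_pos_eq X) by lra.
    apply Rle_trans with (11/10 * C1 * / (9/10 * h0)).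
    apply Rmult_le_compat; try lra. apply Rmult_le_pos; [lra| apply Rabs_pos].
    left; apply Rinv_0_lt_compat; lra. apply Rmult_le_compat; try lra. apply Rabs_pos.
    apply Rinv_le_contravar; lra.
    apply Rle_trans with (11/9 * (C1 * / h0)). right; field; lra.
    apply Rmult_le_compat_r; lra. }
  assert (T3 : Rabs (X * e * P / r) <= 7/10 * eps * Lam * r).
  { replace (X * e * P / r) with (- (X * e * p)) by (rewrite HPp; field; lra).
    rewrite Rabs_Ropp, Rabs_pos_eq by (apply Rmult_le_pos; [apply Rmult_le_pos|]; lra).
    assert (X * e <= 11/10 * eps) by (apply Rmult_le_compat; lra).
    apply Rle_trans with (11/10 * eps * (11/20 * Lam * r)).
    apply Rmult_le_compat; try lra. apply Rmult_le_pos; lra.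
    assert (0 <= eps * Lam * r) by (apply Rmult_le_pos; [apply Rmult_le_pos|]; lra). lra. }
  assert (T4 : Rabs ((1 + P / 4) * e * P ^ 2 / (2 * r)) <= 3 * eps * Lam * r).
  { replace ((1 + P / 4) * e * P ^ 2 / (2 * r)) with ((1 + P / 4) * (e * (r * p * p) / 2)) by (rewrite HPp; field; lra).
    rewrite Rabs_mult, (Rabs_pos_eq (e * (r * p * p) / 2)).
    2: { apply Rmult_le_pos; [|lra]. apply Rmult_le_pos; [lra|]. apply Rmult_le_pos; [|lra]. apply Rmult_le_pos; lra. }
    assert (Hrpp : 0 <= r * p * p) by (apply Rmult_le_pos; nra).
    assert (Hrpp2 : r * p * p <= 88/10 * (11/20 * Lam * r)) by (apply Rmult_le_compat; nra).
    assert (e * (r * p * p) <= eps * (88/10 * (11/20 * Lam * r))) by (apply Rmult_le_compat; nra).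
    apply Rle_trans with (12/10 * (eps * (88/10 * (11/20 * Lam * r)) / 2)).
    apply Rmult_le_compat; try lra. apply Rabs_pos. apply Rmult_le_pos; [|lra]. nra.
    assert (0 <= eps * Lam * r) by (apply Rmult_le_pos; [apply Rmult_le_pos|]; lra). lra. }
  eapply Rle_trans. apply Rabs_triang. eapply Rle_trans. apply Rplus_le_compat_r. apply Rabs_triang.
  eapply Rle_trans. apply Rplus_le_compat_r. apply Rplus_le_compat_r. apply Rabs_triang.
  rewrite Rabs_Ropp.
  assert (0 <= eps * Lam * r) by (apply Rmult_le_pos; [apply Rmult_le_pos|]; lra).
  assert (eps * Lam * r * 100 <= Lam * dl * r) by nra.
  assert (Lam * dl * r / 2 = 1/2 * (Lam * dl * r)) by field. 
  lra.
Qed.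

Lemma integ (F F' : R -> R) a b R : 0 <= a -> 0 <= b -> 0 < R ->
  (forall r, 0 < r <= R -> is_derive F r (F' r) /\ Rabs (F' r) <= 2 * a * r + b) ->
  (forall e, 0 < e -> exists d, 0 < d /\ forall t, 0 < t < d -> Rabs (F t) <= e) ->
  forall r, 0 < r <= R -> Rabs (F r) <= a * r ^ 2 + b * r.
Proof.
  intros Ha Hb HR HD Hlim r Hr. apply Rabs_le. split.
  - assert (0 <= a * r ^ 2 + b * r + F r); [|lra].
    apply (from0 (fun t => a * t ^ 2 + b * t + F t) (fun t => 2 * a * t + b + F' t) r 0). lra.
    + intros t Ht. destruct (HD t ltac:(lra)) as [D1 D2]. split.
      * eapply der_eq. apply dplus. apply dplus. apply dscal. apply dpow2. apply did.
        apply dscal. apply did. exact D1. cbv beta. ring.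
      * apply Rabs_le_between in D2. lra. 
    + intros e He. destruct (Hlim e He) as [d [Hd Hd']]. exists d. split; auto.
      intros t Ht. specialize (Hd' t Ht). apply Rabs_le_between in Hd'.
      assert (0 <= a * t ^ 2) by (apply Rmult_le_pos; [lra| apply pow2_ge_0]).
      assert (0 <= b * t) by (apply Rmult_le_pos; lra). lra.
  - assert (0 <= a * r ^ 2 + b * r - F r); [|lra].
    apply (from0 (fun t => a * t ^ 2 + b * t - F t) (fun t => 2 * a * t + b - F' t) r 0). lra.
    + intros t Ht. destruct (HD t ltac:(lra)) as [D1 D2]. split.
      * eapply der_eq. apply dminus. apply dplus. apply dscal. apply dpow2. apply did.
        apply dscal. apply did. exact D1. cbv beta. ring.
      * apply Rabs_le_between in D2. lra. 
    + intros e He. destruct (Hlim e He) as [d [Hd Hd']]. exists d. split; auto.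
      intros t Ht. specialize (Hd' t Ht). apply Rabs_le_between in Hd'.
      assert (0 <= a * t ^ 2) by (apply Rmult_le_pos; [lra| apply pow2_ge_0]).
      assert (0 <= b * t) by (apply Rmult_le_pos; lra). lra.
Qed.

Definition Pfun (g1 U U1 : R -> R) := fun s => s * g1 (U s) * U1 s.
Definition Efun (L : R) (h f1 g1 U U1 : R -> R) :=
  fun s => Pfun g1 U U1 s ^ 2 / 2 + 2 * Pfun g1 U U1 s + L * s ^ 2 * h s * f1 (U s).
Definition Xfun (h f1 U : R -> R) (M : R) := fun s => h s * f1 (U s) / (h 0 * f1 M).
Definition Wfun (M : R) (h f f1 g1 U U1 : R -> R) :=
  fun s => exp (ln (f M) - ln (f (U s))) * (Xfun h f1 U M s - (1 + Pfun g1 U U1 s / 4) ^ 2).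

Lemma der_eps (F : R -> R) x l : is_derive F x l ->
  forall e, 0 < e -> exists d, 0 < d /\ forall y, Rabs (y - x) < d -> Rabs (F y - F x) < e.
Proof.
  intros H e He. apply der_cont in H. apply continuity_pt_filterlim in H.
  apply (proj1 (filterlim_locally _ _)) with (eps := mkposreal e He) in H.
  destruct H as [d Hd]. exists d. split. apply cond_pos. intros y Hy. apply (Hd y). exact Hy.
Qed.

Lemma core_all (h h1 f f1 f2 g1 g2 U U1 U2 : R -> R) (t0 T L M RR eps C1 : R) :
  (forall t, t0 < t -> f1 t = f t * g1 t /\ f2 t = f1 t * g1 t + f t * g2 t) ->
  (forall t, t0 < t -> is_derive f t (f1 t) /\ is_derive f1 t (f2 t) /\ is_derive g1 t (g2 t)) ->
  (forall t, t0 <= t -> 0 < f t) -> (forall t, t0 <= t -> 0 < g1 t) -> (forall t, t0 <= t -> 0 < g2 t) ->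
  (forall s t, t0 < s <= t -> g1 s <= g1 t /\ f s <= f t /\ f1 s <= f1 t /\
      ln (f s) + g1 s * (t - s) <= ln (f t) /\ ln (f t) - ln (f s) <= g1 t * (t - s)) ->
  (forall s, T <= s <= M -> ln (g1 M) - ln (g1 s) <= eps * (ln (f M) - ln (f s))) ->
  (forall t, T <= t -> g2 t <= eps * g1 t ^ 2) ->
  t0 < T -> t0 < M -> T <= M - 5 / g1 M ->
  (forall r, 0 < r < 1 -> is_derive U r (U1 r) /\ is_derive U1 r (U2 r) /\
      U1 r + r * U2 r = - (r * L * h r * f (U r))) ->
  (forall e, 0 < e -> exists d, 0 < d /\ forall t, 0 < t < d -> Rabs (U t - M) < e /\ Rabs (U1 t) < e) ->
  (forall r, 0 < r < 1 -> U1 r <= 0 /\ U r <= M) ->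
  (forall r, 0 < r < 1 -> is_derive h r (h1 r)) ->
  (forall e, 0 < e -> exists d, 0 < d /\ forall t, 0 < t < d -> Rabs (h t - h 0) < e) ->
  (forall r, 0 < r <= RR -> (9/10 * h 0 <= h r <= 11/10 * h 0) /\ Rabs (h1 r) <= C1) -> 0 < h 0 ->
  (forall r, 0 < r <= RR -> - (r * U1 r) <= L * (11/10 * h 0) * f M * r ^ 2 / 2 /\
                          M - U r <= L * (11/10 * h 0) * f M * r ^ 2 / 4) ->
  0 < RR < 1 -> L * h 0 * f1 M * RR ^ 2 <= 16 -> 0 < L -> 0 < eps <= 1/100 -> 0 <= C1 ->
  forall r, 0 < r <= RR ->
    (T <= U r /\ M - U r <= 5 / g1 M /\
    0 <= ln (f M) - ln (f (U r)) <= 11/10 * (L * h 0 * f1 M) * r ^ 2 / 4 /\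
    0 <= ln (g1 M) - ln (g1 (U r)) <= 5 * eps /\
    0 <= - (r * g1 (U r) * U1 r) <= 11/10 * (L * h 0 * f1 M) * r ^ 2 / 2 /\
    0 <= L * r ^ 2 * h r * f1 (U r) <= 11/10 * (L * h 0 * f1 M) * r ^ 2 /\
    L * r ^ 2 * h r * f1 (U r) = (L * h 0 * f1 M) * r ^ 2 * (h r * f1 (U r) / (h 0 * f1 M)) /\
    1/270 <= h r * f1 (U r) / (h 0 * f1 M) <= 11/10) /\
    Rabs (Efun L h f1 g1 U U1 r) <= 8 * (100 * eps + RR * (C1 / h 0)) /\
    Rabs (Xfun h f1 U M r - (1 + Pfun g1 U U1 r / 4) ^ 2) <= 1458 * (100 * eps + RR * (C1 / h 0)).
Proof.
  intros Hrel Hdf Hfp Hg1p Hg2p Hmono Hlng Heps HT HM HTM D Lim Mon Dh Hhlim Hhb Hh0 Hapri HR HLR HL Heps0 HC1.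
  pose proof (fun r Hr => core_pt h h1 f f1 f2 g1 g2 U U1 U2 t0 T L M RR eps
      Hrel Hfp Hg1p Hmono Hlng HT HM HTM Mon (fun r Hr => proj1 (Hhb r Hr)) Hh0 Hapri HR HLR HL Heps0 r Hr) as PT.
  set (Lam := L * h 0 * f1 M) in *.
  set (dl := 100 * eps + RR * (C1 / h 0)).
  assert (HgM : 0 < g1 M) by (apply Hg1p; lra).
  assert (HfM : 0 < f M) by (apply Hfp; lra).
  assert (Hf1M : 0 < f1 M) by (rewrite (proj1 (Hrel M HM)); apply Rmult_lt_0_compat; lra).
  assert (HLam : 0 < Lam) by (unfold Lam; apply Rmult_lt_0_compat; [apply Rmult_lt_0_compat|]; lra).
  assert (Hch : 0 <= C1 / h 0) by (apply Rmult_le_pos; [lra| left; apply Rinv_0_lt_compat; lra]).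
  assert (Hdl : 0 <= dl) by (unfold dl; assert (0 <= RR * (C1 / h 0)) by (apply Rmult_le_pos; lra); lra).
  assert (HRdl : RR * (C1 / h 0) <= dl) by (unfold dl; lra).
  assert (Hr2 : forall r, 0 < r <= RR -> Lam * r ^ 2 <= 16).
  { intros r Hr. apply Rle_trans with (Lam * RR ^ 2); [|exact HLR]. apply Rmult_le_compat_l; [lra|].
    apply pow_incr; lra. }
  assert (LOC : forall r, 0 < r <= RR ->
     t0 < U r /\ 0 < h r /\ 0 < f (U r) /\ 0 < g1 (U r) /\ 0 < g2 (U r) /\
     g2 (U r) <= eps * g1 (U r) ^ 2 /\ f1 (U r) <= f1 M /\ 0 < f1 (U r)).
  { intros r Hr. destruct (PT r Hr) as [H1 _].
    assert (t0 < U r) by lra. destruct (Hhb r Hr) as [[Hh1 Hh2] _].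
    repeat split; try lra. apply Hfp; lra. apply Hg1p; lra. apply Hg2p; lra. apply Heps; lra.
    destruct (Mon r ltac:(lra)) as [_ HUM]. destruct (Hmono (U r) M) as [_ [_ [X _]]]; [lra|exact X].
    rewrite (proj1 (Hrel (U r) ltac:(lra))).
    apply Rmult_lt_0_compat; [apply Hfp| apply Hg1p]; lra. }
  set (E' := fun r => (Pfun g1 U U1 r + 2) * r * g2 (U r) * U1 r ^ 2 + r ^ 2 * L * h1 r * f1 (U r)
                  + r ^ 2 * L * h r * f (U r) * g2 (U r) * U1 r).
  assert (DE : forall r, 0 < r <= RR -> is_derive (Efun L h f1 g1 U U1) r (E' r) /\
                 Rabs (E' r) <= 2 * (Lam * dl / 2) * r + 0).
  { intros r Hr. destruct (LOC r Hr) as [L1 [L2 [L3 [L4 [L5 [L6 [L7 L8]]]]]]].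
    destruct (D r ltac:(lra)) as [D1 [D2 D3]]. destruct (Hdf (U r) L1) as [F1 [F2 F3]].
    destruct (Hrel (U r) L1) as [R1 R2].
    destruct (core_der h h1 f f1 f2 g1 g2 U U1 U2 t0 L M r ltac:(lra) L1 HM D1 D2 D3 (Dh r ltac:(lra))
       L2 Hh0 F1 F2 F3 R1 R2 L3 L4 HfM Hf1M) as [CE _].
    split. exact CE.
    destruct (PT r Hr) as [_ [_ [_ [_ [P1 [P2 [_ _]]]]]]].
    set (e := g2 (U r) / g1 (U r) ^ 2).
    assert (He : 0 <= e <= eps).
    { unfold e. split. apply Rmult_le_pos; [lra| left; apply Rinv_0_lt_compat; apply pow_lt; lra].
      apply div_le. apply pow_lt; lra. lra. }
    assert (EQ : E' r = (Pfun g1 U U1 r + 2) * e * Pfun g1 U U1 r ^ 2 / r + r ^ 2 * L * h1 r * f1 (U r)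
                    + e * (L * r ^ 2 * h r * f1 (U r)) * Pfun g1 U U1 r / r).
    { unfold E', e, Pfun. rewrite R1. field. lra. }
    rewrite EQ, Rplus_0_r.
    replace (2 * (Lam * dl / 2) * r) with (Lam * r * (100 * eps + RR * (C1 / h 0))) by (unfold dl; nra).
    apply bnd_E; try lra.
    - unfold Pfun. lra.
    - apply Hr2; auto.
    - destruct (Hhb r Hr) as [_ Hh1].
      rewrite Rabs_mult, (Rabs_pos_eq (f1 (U r))) by lra.
      rewrite Rabs_mult, (Rabs_pos_eq (r ^ 2 * L)) by (apply Rmult_le_pos; [apply pow2_ge_0|lra]).
      apply Rle_trans with (r ^ 2 * L * C1 * f1 M).
      { apply Rmult_le_compat; try lra. apply Rmult_le_pos. apply Rmult_le_pos; [apply pow2_ge_0|lra]. apply Rabs_pos.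
        apply Rmult_le_compat_l; auto. apply Rmult_le_pos; [apply pow2_ge_0|lra]. }
      replace (r ^ 2 * L * C1 * f1 M) with (Lam * r * (r * (C1 / h 0))) by (unfold Lam; field; lra).
      apply Rmult_le_compat_l. nra. apply Rmult_le_compat_r; lra. }
  assert (Elim : forall e, 0 < e -> exists d, 0 < d /\ forall t, 0 < t < d -> Rabs (Efun L h f1 g1 U U1 t) <= e).
  { intros e He. exists (Rmin RR (e / (5 * Lam))). split.
    { apply Rmin_pos. lra. apply Rdiv_lt_0_compat; lra. }
    intros t Ht. pose proof (Rmin_l RR (e / (5 * Lam))). pose proof (Rmin_r RR (e / (5 * Lam))).
    assert (Ht' : 0 < t <= RR) by lra.
    destruct (PT t Ht') as [_ [_ [_ [_ [P1 [P2 _]]]]]].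
    pose proof (Hr2 t Ht').
    assert (Ht2 : t ^ 2 <= t) by nra.
    assert (Hte : 5 * Lam * t <= e).
    { apply Rle_trans with (5 * Lam * (e / (5 * Lam))). apply Rmult_le_compat_l; lra. right; field; lra. }
    unfold Efun, Pfun. apply Rabs_le. 
    set (P := t * g1 (U t) * U1 t) in *. set (Phi := L * t ^ 2 * h t * f1 (U t)) in *.
    assert (P ^ 2 <= 88/10 * (- P)) by nra.
    assert (Lam * t ^ 2 <= Lam * t) by (apply Rmult_le_compat_l; lra).
    split; nra. }
  assert (EB : forall r, 0 < r <= RR -> Rabs (Efun L h f1 g1 U U1 r) <= (Lam * dl / 2) * r ^ 2 + 0 * r).
  { apply (integ _ E'). nra. lra. lra. exact DE. exact Elim. }
  set (W' := fun r => exp (ln (f M) - ln (f (U r))) * ((1 + Pfun g1 U U1 r / 4) * Efun L h f1 g1 U U1 r / (2 * r)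
       + Xfun h f1 U M r * h1 r / h r + Xfun h f1 U M r * g2 (U r) * U1 r / g1 (U r)
       - (1 + Pfun g1 U U1 r / 4) * r * g2 (U r) * U1 r ^ 2 / 2)).
  assert (Gexp : forall r, 0 < r <= RR -> 1 <= exp (ln (f M) - ln (f (U r))) <= 243).
  { intros r Hr. destruct (PT r Hr) as [_ [_ [[G1 G2] _]]]. pose proof (Hr2 r Hr). split.
    - rewrite <- exp_0. apply exp_le_mono. lra.
    - apply Rle_trans with (exp 5). apply exp_le_mono. lra. apply exp5. }
  assert (DW : forall r, 0 < r <= RR -> is_derive (Wfun M h f f1 g1 U U1) r (W' r) /\
                 Rabs (W' r) <= 2 * (243 * Lam * dl / 4) * r + 486 * (C1 / h 0)).
  { intros r Hr. destruct (LOC r Hr) as [L1 [L2 [L3 [L4 [L5 [L6 [L7 L8]]]]]]].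
    destruct (D r ltac:(lra)) as [D1 [D2 D3]]. destruct (Hdf (U r) L1) as [F1 [F2 F3]].
    destruct (Hrel (U r) L1) as [R1 R2].
    destruct (core_der h h1 f f1 f2 g1 g2 U U1 U2 t0 L M r ltac:(lra) L1 HM D1 D2 D3 (Dh r ltac:(lra))
       L2 Hh0 F1 F2 F3 R1 R2 L3 L4 HfM Hf1M) as [_ CW].
    split. exact CW.
    destruct (PT r Hr) as [_ [_ [_ [_ [P1 [P2 [_ [X1 X2]]]]]]]].
    set (e := g2 (U r) / g1 (U r) ^ 2).
    assert (He : 0 <= e <= eps).
    { unfold e. split. apply Rmult_le_pos; [lra| left; apply Rinv_0_lt_compat; apply pow_lt; lra].
      apply div_le. apply pow_lt; lra. lra. }
    assert (EQ : W' r = exp (ln (f M) - ln (f (U r))) *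
       ((1 + Pfun g1 U U1 r / 4) * Efun L h f1 g1 U U1 r / (2 * r) + Xfun h f1 U M r * h1 r / h r
        + Xfun h f1 U M r * e * Pfun g1 U U1 r / r - (1 + Pfun g1 U U1 r / 4) * e * Pfun g1 U U1 r ^ 2 / (2 * r))).
    { unfold W', e, Pfun. cbv beta. field. lra. }
    rewrite EQ, Rabs_mult, (Rabs_pos_eq (exp _)) by (left; apply exp_pos).
    destruct (Gexp r Hr) as [G1 G2].
    assert (BW := bnd_W (Pfun g1 U U1 r) (Xfun h f1 U M r) (Efun L h f1 g1 U U1 r) e eps Lam r (h r) (h1 r)
      (h 0) C1 RR Hr HLam ltac:(unfold Pfun; lra) (Hr2 r Hr) ltac:(unfold Xfun; lra) He HC1 Hh0).
    destruct (Hhb r Hr) as [[Hh1 Hh2] Hh3].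
    specialize (EB r Hr).
    assert (Hq : Rabs ((1 + Pfun g1 U U1 r / 4) * Efun L h f1 g1 U U1 r / (2 * r) + Xfun h f1 U M r * h1 r / h r +
     Xfun h f1 U M r * e * Pfun g1 U U1 r / r - (1 + Pfun g1 U U1 r / 4) * e * Pfun g1 U U1 r ^ 2 / (2 * r))
      <= Lam * dl * r / 2 + 2 * (C1 / h 0)).
    { apply BW; auto. unfold dl in EB. lra. }
    assert (0 <= Rabs ((1 + Pfun g1 U U1 r / 4) * Efun L h f1 g1 U U1 r / (2 * r) + Xfun h f1 U M r * h1 r / h r +
     Xfun h f1 U M r * e * Pfun g1 U U1 r / r - (1 + Pfun g1 U U1 r / 4) * e * Pfun g1 U U1 r ^ 2 / (2 * r))) by apply Rabs_pos.
    apply Rle_trans with (243 * (Lam * dl * r / 2 + 2 * (C1 / h 0))).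
    apply Rmult_le_compat; lra. lra. }
  assert (Wlim : forall e, 0 < e -> exists d, 0 < d /\ forall t, 0 < t < d -> Rabs (Wfun M h f f1 g1 U U1 t) <= e).
  { intros e He. set (e1 := e / 729).
    assert (He1 : 0 < e1) by (unfold e1; lra).
    destruct (Hhlim (e1 * h 0) ltac:(nra)) as [dh [Hdh Hdh']].
    destruct (der_eps f1 M (f2 M) (proj1 (proj2 (Hdf M HM))) (e1 * f1 M) ltac:(nra)) as [df [Hdf1 Hdf']].
    destruct (Lim df Hdf1) as [dU [HdU HdU']].
    exists (Rmin (Rmin RR dh) (Rmin dU (e1 / Lam))). split.
    { apply Rmin_pos; apply Rmin_pos; try lra. apply Rdiv_lt_0_compat; lra. }
    intros t Ht. pose proof (Rmin_l (Rmin RR dh) (Rmin dU (e1 / Lam))). pose proof (Rmin_r (Rmin RR dh) (Rmin dU (e1 / Lam))).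
    pose proof (Rmin_l RR dh). pose proof (Rmin_r RR dh). pose proof (Rmin_l dU (e1 / Lam)). pose proof (Rmin_r dU (e1 / Lam)).
    assert (Ht' : 0 < t <= RR) by lra.
    destruct (PT t Ht') as [_ [_ [_ [_ [P1 [P2 [_ [X1 X2]]]]]]]].
    destruct (LOC t Ht') as [L1 [L2 [L3 [L4 [L5 [L6 [L7 L8]]]]]]].
    destruct (Gexp t Ht') as [G1 G2]. pose proof (Hr2 t Ht').
    specialize (Hdh' t ltac:(lra)). destruct (HdU' t ltac:(lra)) as [HU _].
    specialize (Hdf' (U t) HU).
    assert (Hte : Lam * t <= e1).
    { apply Rle_trans with (Lam * (e1 / Lam)). apply Rmult_le_compat_l; lra. right; field; lra. }
    assert (Ht2 : t ^ 2 <= t) by nra.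
    unfold Wfun. rewrite Rabs_mult, (Rabs_pos_eq (exp _)) by (left; apply exp_pos).
    assert (XB : Rabs (Xfun h f1 U M t - 1) <= 2 * e1).
    { unfold Xfun.
      replace (h t * f1 (U t) / (h 0 * f1 M) - 1) with
        ((h t - h 0) / h 0 * (f1 (U t) / f1 M) + (f1 (U t) - f1 M) / f1 M) by (field; lra).
      eapply Rle_trans. apply Rabs_triang.
      assert (Hq1 : Rabs ((h t - h 0) / h 0 * (f1 (U t) / f1 M)) <= e1).
      { rewrite Rabs_mult. unfold Rdiv. rewrite !Rabs_mult, !Rabs_inv, (Rabs_pos_eq (h 0)), (Rabs_pos_eq (f1 M)),
          (Rabs_pos_eq (f1 (U t))) by lra.
        assert (Rabs (h t - h 0) * / h 0 <= e1).
        { apply Rmult_le_reg_r with (h 0); auto. rewrite Rmult_assoc, Rinv_l by lra. lra. }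
        assert (f1 (U t) * / f1 M <= 1).
        { apply Rmult_le_reg_r with (f1 M); auto. rewrite Rmult_assoc, Rinv_l by lra. lra. }
        assert (0 <= Rabs (h t - h 0) * / h 0) by (apply Rmult_le_pos; [apply Rabs_pos| left; apply Rinv_0_lt_compat; lra]).
        assert (0 <= f1 (U t) * / f1 M) by (apply Rmult_le_pos; [lra| left; apply Rinv_0_lt_compat; lra]).
        nra. }
      assert (Hq2 : Rabs ((f1 (U t) - f1 M) / f1 M) <= e1).
      { unfold Rdiv. rewrite Rabs_mult, Rabs_inv, (Rabs_pos_eq (f1 M)) by lra.
        apply Rmult_le_reg_r with (f1 M); auto. rewrite Rmult_assoc, Rinv_l by lra. lra. }
      lra. }
    assert (YB : Rabs (1 - (1 + Pfun g1 U U1 t / 4) ^ 2) <= e1).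
    { unfold Pfun. set (P := t * g1 (U t) * U1 t) in *.
      replace (1 - (1 + P / 4) ^ 2) with (- P * (1/2 + P / 16)) by field.
      rewrite Rabs_mult, (Rabs_pos_eq (- P)) by lra.
      assert (Rabs (1/2 + P/16) <= 1) by (apply Rabs_le; nra).
      assert (0 <= Rabs (1/2 + P/16)) by apply Rabs_pos.
      apply Rle_trans with (- P * 1). apply Rmult_le_compat_l; lra. nra. }
    replace (Xfun h f1 U M t - (1 + Pfun g1 U U1 t / 4) ^ 2) with
      ((Xfun h f1 U M t - 1) + (1 - (1 + Pfun g1 U U1 t / 4) ^ 2)) by ring.
    apply Rle_trans with (243 * (3 * e1)).
    apply Rmult_le_compat; try lra. apply Rabs_pos.
    eapply Rle_trans. apply Rabs_triang. lra.
    unfold e1. lra. }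
  assert (WB : forall r, 0 < r <= RR -> Rabs (Wfun M h f f1 g1 U U1 r) <= (243 * Lam * dl / 4) * r ^ 2 + 486 * (C1 / h 0) * r).
  { apply (integ _ W'). nra. lra. lra. exact DW. exact Wlim. }
  intros r Hr. split; [exact (PT r Hr)|]. pose proof (Hr2 r Hr).
  assert (HrC : r * (C1 / h 0) <= dl) by (apply Rle_trans with (RR * (C1 / h 0)); [apply Rmult_le_compat_r; lra| lra]).
  split.
  - specialize (EB r Hr). fold dl. nra.
  - specialize (WB r Hr). fold dl. destruct (Gexp r Hr) as [G1 G2].
    unfold Wfun in WB. rewrite Rabs_mult, (Rabs_pos_eq (exp _)) in WB by (left; apply exp_pos).
    assert (0 <= Rabs (Xfun h f1 U M r - (1 + Pfun g1 U U1 r / 4) ^ 2)) by apply Rabs_pos.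
    assert (Rabs (Xfun h f1 U M r - (1 + Pfun g1 U U1 r / 4) ^ 2) <= exp (ln (f M) - ln (f (U r))) *
       Rabs (Xfun h f1 U M r - (1 + Pfun g1 U U1 r / 4) ^ 2)) by nra.
    nra.
Qed.

Lemma alg_pt (y E Q X phi rho2 d : R) :
  X = y ^ 2 + Q -> Rabs Q <= d -> Rabs E <= d -> phi = 8 * y * (1 - y) + E -> phi = rho2 * X ->
  1/270 <= X -> 0 <= rho2 <= 16 -> y <= 1 -> 0 <= d <= 1/2700 ->
  0 < y /\ Rabs (phi - 64 * rho2 / (8 + rho2) ^ 2) <= 1000 * d.
Proof.
  intros HX HQ HE Hphi Hphi2 HX0 Hr Hy Hd.
  apply Rabs_le_between in HQ. apply Rabs_le_between in HE.
  assert (Hy2 : 1/300 <= y ^ 2) by lra.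
  assert (Hphi0 : 0 <= phi) by (rewrite Hphi2; apply Rmult_le_pos; lra).
  assert (Hypos : 1/18 <= y).
  { destruct (Rle_or_lt (1/18) y) as [H|H]; auto.
    destruct (Rle_or_lt y 0) as [H0|H0].
    - assert (y <= -1/18) by nra. nra.
    - nra. }
  split; [lra|].
  set (ys := 8 / (8 + rho2)).
  assert (Hys : 0 < ys <= 1) by (unfold ys; split; [apply Rdiv_lt_0_compat; lra| apply div_le; lra]).
  assert (K1 : y * (8 - (8 + rho2) * y) = rho2 * Q - E) by (rewrite Hphi2 in Hphi; rewrite HX in Hphi; nra).
  assert (K2 : Rabs (8 - (8 + rho2) * y) <= 306 * d).
  { assert (Rabs (y * (8 - (8 + rho2) * y)) <= 17 * d) by (rewrite K1; apply Rabs_le; nra).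
    rewrite Rabs_mult, (Rabs_pos_eq y) in H by lra.
    assert (0 <= Rabs (8 - (8 + rho2) * y)) by apply Rabs_pos.
    nra. }
  assert (K3 : Rabs (y - ys) <= 39 * d).
  { replace (y - ys) with (- (8 - (8 + rho2) * y) / (8 + rho2)) by (unfold ys; field; lra).
    unfold Rdiv. rewrite Rabs_mult, Rabs_Ropp, Rabs_inv, (Rabs_pos_eq (8 + rho2)) by lra.
    apply Rmult_le_reg_r with (8 + rho2). lra. rewrite Rmult_assoc, Rinv_l, Rmult_1_r by lra.
    assert (0 <= d) by lra. nra. }
  replace (64 * rho2 / (8 + rho2) ^ 2) with (8 * ys * (1 - ys)) by (unfold ys; field; lra).
  rewrite Hphi.
  replace (8 * y * (1 - y) + E - 8 * ys * (1 - ys)) with (8 * (y - ys) * (1 - y - ys) + E) by ring.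
  apply Rabs_le_between in K3. apply Rabs_le. 
  assert (Rabs (1 - y - ys) <= 3) by (apply Rabs_le; lra).
  assert (Rabs (8 * (y - ys) * (1 - y - ys)) <= 8 * (39 * d) * 3).
  { rewrite !Rabs_mult. rewrite (Rabs_pos_eq 8) by lra.
    apply Rmult_le_compat. apply Rmult_le_pos; [lra|apply Rabs_pos]. apply Rabs_pos.
    apply Rmult_le_compat_l. lra. apply Rabs_le; lra. auto. }
  apply Rabs_le_between in H0. lra.
Qed.

Lemma sqrt_close x : 0 <= x -> Rabs (sqrt x - sqrt 8) <= Rabs (x - 8) / 2.
Proof.
  intros Hx.
  assert (H8 : 2 <= sqrt 8).
  { rewrite <- sqrt_square with 2 by lra. apply sqrt_le_1_alt. lra. }
  assert (Hs : 0 <= sqrt x) by apply sqrt_pos.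
  replace (sqrt x - sqrt 8) with ((x - 8) / (sqrt x + sqrt 8)).
  2: { assert (sqrt x * sqrt x = x) by (apply sqrt_sqrt; lra).
       assert (sqrt 8 * sqrt 8 = 8) by (apply sqrt_sqrt; lra).
       field_simplify_eq; [|lra]. nra. }
  unfold Rdiv. rewrite Rabs_mult, Rabs_inv, (Rabs_pos_eq (sqrt x + sqrt 8)) by lra.
  apply Rmult_le_compat_l. apply Rabs_pos. apply Rinv_le_contravar; lra.
Qed.

Lemma alg_final (y E Q X phi rho2 d z : R) :
  X = y ^ 2 + Q -> Rabs Q <= d -> Rabs E <= d -> phi = 8 * y * (1 - y) + E -> phi = rho2 * X ->
  1/270 <= X -> 0 <= rho2 <= 16 -> y <= 1 -> 0 <= d -> 0 < z <= 1 -> d <= z ^ 2 / 100000000 ->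
  2 - 1000 * d <= phi ->
  Rabs (phi - 2) < z /\ Rabs (4 - 4 * y - 2) < z /\ Rabs (sqrt rho2 - sqrt 8) < z.
Proof.
  intros HX HQ HE Hphi Hphi2 HX0 Hr Hy Hd Hz Hdz Hphim.
  assert (Hz2 : z ^ 2 <= z) by nra.
  apply Rabs_le_between in HQ. apply Rabs_le_between in HE.
  assert (P1 : Rabs (phi - 2) <= z / 1000).
  { apply Rabs_le. assert (0 <= (2*y-1)^2) by apply pow2_ge_0. assert (8 * y * (1 - y) <= 2) by nra. nra. }
  assert (P2 : (2 * y - 1) ^ 2 <= z ^ 2 / 100000).
  { assert (8 * y * (1 - y) >= 2 - 1001 * d) by lra. nra. }
  assert (P3 : Rabs (2 * y - 1) <= z / 300).
  { apply Rabs_le. split; nra. }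
  apply Rabs_le_between in P3.
  assert (P4 : Rabs (X - 1/4) <= z / 200).
  { apply Rabs_le. rewrite HX. split; nra. }
  apply Rabs_le_between in P4.
  assert (P5 : Rabs (rho2 - 8) <= z / 7).
  { assert (HXp : 0 < X) by lra.
    replace (rho2 - 8) with ((phi - 8 * X) / X) by (rewrite Hphi2; field; lra).
    apply Rabs_le_between in P1.
    apply Rabs_le. split.
    - apply le_div. lra. nra.
    - apply div_le. lra. nra. }
  split. lra. split. apply Rabs_lt_between. split; nra.
  pose proof (sqrt_close rho2 ltac:(lra)). lra.
Qed.

Lemma lnf_inf (f g1 : R -> R) t0 :
  (forall t, t0 <= t -> 0 < g1 t) ->
  (forall s t, t0 < s <= t -> ln (f s) + g1 s * (t - s) <= ln (f t)) ->
  forall K, exists T, t0 + 1 < T /\ forall t, T <= t -> K <= ln (f t).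
Proof.
  intros Hg Hm K. set (a := g1 (t0 + 1)). assert (Ha : 0 < a) by (apply Hg; lra).
  exists (t0 + 2 + Rabs (K - ln (f (t0 + 1))) / a). split.
  { assert (0 <= Rabs (K - ln (f (t0 + 1))) / a) by (apply Rmult_le_pos; [apply Rabs_pos| left; apply Rinv_0_lt_compat; lra]). lra. }
  intros t Ht.
  assert (0 <= Rabs (K - ln (f (t0 + 1))) / a) by (apply Rmult_le_pos; [apply Rabs_pos| left; apply Rinv_0_lt_compat; lra]).
  specialize (Hm (t0 + 1) t ltac:(lra)). fold a in Hm.
  assert (a * (t - (t0 + 1)) >= Rabs (K - ln (f (t0 + 1)))).
  { assert (a * (Rabs (K - ln (f (t0 + 1))) / a) = Rabs (K - ln (f (t0 + 1)))) by (field; lra).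
    assert (a * (t - (t0 + 1)) >= a * (Rabs (K - ln (f (t0 + 1))) / a)) by (apply Rle_ge, Rmult_le_compat_l; lra).
    lra. }
  pose proof (Rle_abs (K - ln (f (t0 + 1)))). lra.
Qed.

Lemma eps_T (f g1 g2 : R -> R) t0 q :
  (forall t, t0 <= t -> 0 < g1 t) -> (forall t, t0 <= t -> 0 < g2 t) ->
  (forall s t, t0 < s <= t -> ln (f s) + g1 s * (t - s) <= ln (f t)) ->
  1 <= q -> is_lim (fun t => (g1 t)^2 / (ln (f t) * g2 t)) p_infty (Finite q) ->
  forall eps, 0 < eps -> exists T, t0 + 1 < T /\ forall t, T <= t -> g2 t <= eps * g1 t ^ 2.
Proof.
  intros Hg1 Hg2 Hm Hq Hlim eps Heps.
  assert (Hhalf : 0 < / 2) by lra.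
  apply (proj1 (filterlim_locally _ _)) with (eps := mkposreal _ Hhalf) in Hlim.
  destruct Hlim as [M1 HM1].
  destruct (lnf_inf f g1 t0 Hg1 Hm (2 / eps)) as [T1 [HT1 HT1']].
  exists (Rmax T1 (M1 + 1)). split. { pose proof (Rmax_l T1 (M1 + 1)). lra. }
  intros t Ht. pose proof (Rmax_l T1 (M1 + 1)). pose proof (Rmax_r T1 (M1 + 1)).
  specialize (HM1 t ltac:(lra)). apply ballR in HM1.
  assert (Hb : Rabs (g1 t ^ 2 / (ln (f t) * g2 t) - q) < / 2) by exact HM1.
  apply Rabs_def2 in Hb.
  specialize (HT1' t ltac:(lra)).
  assert (H2e : 0 < 2 / eps) by (apply Rdiv_lt_0_compat; lra).
  assert (Hl : 0 < ln (f t)) by lra.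
  assert (Hg2t : 0 < g2 t) by (apply Hg2; lra).
  assert (Hr : / 2 <= g1 t ^ 2 / (ln (f t) * g2 t)) by lra.
  assert (Hp : 0 < ln (f t) * g2 t) by (apply Rmult_lt_0_compat; lra).
  assert (/ 2 * (ln (f t) * g2 t) <= g1 t ^ 2).
  { apply Rmult_le_reg_r with (/ (ln (f t) * g2 t)). apply Rinv_0_lt_compat; lra.
    rewrite Rmult_assoc, Rinv_r, Rmult_1_r by lra. exact Hr. }
  assert (2 / eps * g2 t <= ln (f t) * g2 t) by (apply Rmult_le_compat_r; lra).
  assert (2 / eps * g2 t = 2 * (g2 t / eps)) by (field; lra).
  assert (g2 t / eps <= g1 t ^ 2) by lra.
  apply Rmult_le_reg_l with (/ eps). apply Rinv_0_lt_compat; lra.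
  replace (/ eps * (eps * g1 t ^ 2)) with (g1 t ^ 2) by (field; lra).
  replace (/ eps * g2 t) with (g2 t / eps) by (field; lra). lra.
Qed.

Lemma final_n (h h1 f f1 f2 g1 g2 U U1 U2 : R -> R) (t0 L M eps T dh C1 : R) :
  (forall t, t0 < t -> f1 t = f t * g1 t /\ f2 t = f1 t * g1 t + f t * g2 t) ->
  (forall t, t0 < t -> is_derive f t (f1 t) /\ is_derive f1 t (f2 t) /\ is_derive g1 t (g2 t)) ->
  (forall t, t0 <= t -> 0 < f t) -> (forall t, t0 <= t -> 0 < g1 t) -> (forall t, t0 <= t -> 0 < g2 t) ->
  (forall s t, t0 < s <= t -> g1 s <= g1 t /\ f s <= f t /\ f1 s <= f1 t /\
      ln (f s) + g1 s * (t - s) <= ln (f t) /\ ln (f t) - ln (f s) <= g1 t * (t - s)) ->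
  (forall t, 0 <= t -> 0 <= f t) ->
  (forall r, 0 < r < 1 -> is_derive h r (h1 r)) ->
  (forall e, 0 < e -> exists d, 0 < d /\ forall t, 0 < t < d -> Rabs (h t - h 0) < e) ->
  (forall r, 0 <= r < dh -> (9/10 * h 0 <= h r <= 11/10 * h 0) /\ Rabs (h1 r) <= C1) ->
  (forall r, 0 <= r <= 1 -> 0 < h r) -> 0 < dh <= 1 -> 0 <= C1 ->
  (forall r, 0 < r < 1 -> is_derive U r (U1 r) /\ is_derive U1 r (U2 r) /\
      U1 r + r * U2 r = - (r * L * h r * f (U r))) ->
  (forall e, 0 < e -> exists d, 0 < d /\ forall t, 0 < t < d -> Rabs (U t - M) < e /\ Rabs (U1 t) < e) ->
  (forall r, 0 < r < 1 -> U1 r <= 0 /\ U r <= M) ->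
  (forall r, 0 < r < 1 -> 0 < U r) -> 0 < L ->
  0 < eps <= 1/100 -> t0 + 1 < T -> (forall t, T <= t -> g2 t <= eps * g1 t ^ 2) ->
  (forall s t, T <= s <= t -> ln (g1 t) - ln (g1 s) <= eps * (ln (f t) - ln (f s))) ->
  T <= M - 5 / g1 (t0 + 1) -> t0 + 1 <= M -> (forall s, 0 <= s <= M -> f s <= f M) ->
  16 / dh ^ 2 < L * h 0 * f1 M ->
  let s := sqrt (L * h 0 * f1 M) in
  let RR := 4 / s in
  let d := 1458 * (100 * eps + RR * (C1 / h 0)) in
  let phi := fun r => L * r ^ 2 * h r * f1 (U r) in
  forall r, 2 / s <= r <= 4 / s -> (forall x, 2 / s <= x <= 4 / s -> phi x <= phi r) ->
  d <= 1/10000 ->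
    (2 / s < r < 4 / s /\ is_derive phi r 0 /\ (forall x, 2 / s < x < 4 / s -> t0 <= U x) /\
     (forall z, 0 < z <= 1 -> d <= z ^ 2 / 100000000 ->
        Rabs (phi r - 2) < z /\ Rabs (- r * g1 (U r) * U1 r - 2) < z /\ Rabs (r * s - 2 * sqrt 2) < z) /\
     M - U r <= 5 / g1 M /\ 0 <= ln (f M) - ln (f (U r)) <= 5 /\
     exp (- (5 * eps)) <= g1 (U r) / g1 M <= 1).
Proof.
  intros Hrel Hdf Hfp Hg1p Hg2p Hmono Hfnn Dh Hhlim HB Hhpos Hdh HC1 D Lim Mon Hupos HL Heps HT HTe HLNG HTM HM Hfm HLam
    s RR d phi r Hr Hmax Hd.
  set (Lam := L * h 0 * f1 M) in *.
  assert (Hh0 : 0 < h 0) by (apply Hhpos; lra).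
  assert (HM0 : t0 < M) by lra.
  assert (Hg1M : 0 < g1 M) by (apply Hg1p; lra).
  assert (HfM : 0 < f M) by (apply Hfp; lra).
  assert (Hf1M : 0 < f1 M) by (rewrite (proj1 (Hrel M HM0)); apply Rmult_lt_0_compat; lra).
  assert (HLam0 : 0 < Lam) by (unfold Lam; apply Rmult_lt_0_compat; [apply Rmult_lt_0_compat|]; lra).
  assert (Hs : 0 < s) by (apply sqrt_lt_R0; lra).
  assert (Hsdef : s = sqrt Lam) by reflexivity.
  assert (Hs2 : s * s = Lam) by (apply sqrt_sqrt; lra).
  assert (Hdh2 : 16 < dh ^ 2 * Lam).
  { assert (0 < dh ^ 2) by (apply pow_lt; lra).
    apply Rmult_lt_compat_l with (r := dh ^ 2) in HLam; [|lra].
    replace (dh ^ 2 * (16 / dh ^ 2)) with 16 in HLam by (field; lra). lra. }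
  assert (HRR : 0 < RR < dh).
  { unfold RR. split. apply Rdiv_lt_0_compat; lra.
    assert (Hds : 0 < dh * s) by (apply Rmult_lt_0_compat; lra).
    assert (Hsq : (dh * s) ^ 2 = dh ^ 2 * Lam) by (rewrite <- Hs2; ring).
    assert (4 < dh * s) by nra.
    apply Rmult_lt_reg_r with s; auto. unfold Rdiv. rewrite Rmult_assoc, Rinv_l, Rmult_1_r by lra. lra. }
  assert (HLR : Lam * RR ^ 2 <= 16) by (unfold RR; rewrite <- Hs2; right; field; lra).
  assert (HTM' : T <= M - 5 / g1 M).
  { assert (g1 (t0 + 1) <= g1 M) by (apply (Hmono (t0+1) M); lra).
    assert (0 < g1 (t0 + 1)) by (apply Hg1p; lra).
    assert (5 / g1 M <= 5 / g1 (t0 + 1)).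
    { unfold Rdiv. apply Rmult_le_compat_l. lra. apply Rinv_le_contravar; lra. }
    lra. }
  assert (Hhb' : forall x, 0 < x <= RR -> (9/10 * h 0 <= h x <= 11/10 * h 0) /\ Rabs (h1 x) <= C1).
  { intros x Hx. apply HB. lra. }
  assert (Hapri : forall x, 0 < x <= RR -> - (x * U1 x) <= L * (11/10 * h 0) * f M * x ^ 2 / 2 /\
                          M - U x <= L * (11/10 * h 0) * f M * x ^ 2 / 4).
  { intros x Hx. apply (u_apri h f U U1 U2 L M (11/10 * h 0) D Lim Mon Hupos HL Hfnn); auto.
    intros t Ht; apply Hhpos; lra. lra. intros t Ht. apply HB. lra. }
  assert (HLNG' : forall s0, T <= s0 <= M -> ln (g1 M) - ln (g1 s0) <= eps * (ln (f M) - ln (f s0))).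
  { intros s0 Hs0. apply HLNG. lra. }
  pose proof (core_all h h1 f f1 f2 g1 g2 U U1 U2 t0 T L M RR eps C1 Hrel Hdf Hfp Hg1p Hg2p Hmono HLNG' HTe
    ltac:(lra) HM0 HTM' D Lim Mon Dh Hhlim Hhb' Hh0 Hapri ltac:(lra) HLR HL Heps HC1) as CA.
  assert (Hdl0 : 0 <= 100 * eps + RR * (C1 / h 0)).
  { assert (0 <= RR * (C1 / h 0)) by (apply Rmult_le_pos; [lra| apply Rmult_le_pos; [lra| left; apply Rinv_0_lt_compat; lra]]). lra. }
  assert (AP : forall x, 0 < x <= RR ->
     phi x = Lam * x ^ 2 * Xfun h f1 U M x /\ 1/270 <= Xfun h f1 U M x /\
     1 + Pfun g1 U U1 x / 4 <= 1 /\ Rabs (Efun L h f1 g1 U U1 x) <= d /\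
     Rabs (Xfun h f1 U M x - (1 + Pfun g1 U U1 x / 4) ^ 2) <= d /\
     phi x = 8 * (1 + Pfun g1 U U1 x / 4) * (1 - (1 + Pfun g1 U U1 x / 4)) + Efun L h f1 g1 U U1 x /\
     0 <= Lam * x ^ 2 <= 16 /\ T <= U x).
  { intros x Hx. destruct (CA x Hx) as [[P1 [P2 [P3 [P4 [P5 [P6 [P7 P8]]]]]]] [C1' C2']].
    assert (Lam * x ^ 2 <= 16).
    { apply Rle_trans with (Lam * RR ^ 2); auto. apply Rmult_le_compat_l; [lra|]. apply pow_incr; lra. }
    repeat split.
    - exact P7.
    - apply P8.
    - unfold Pfun. lra.
    - unfold d. lra.
    - unfold d. lra.
    - unfold Efun, phi, Pfun. cbv beta. field.
    - apply Rmult_le_pos; [lra| apply pow2_ge_0].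
    - auto.
    - apply P1. }
  assert (AQ : forall x, 0 < x <= RR -> Rabs (phi x - 64 * (Lam * x ^ 2) / (8 + Lam * x ^ 2) ^ 2) <= 1000 * d).
  { intros x Hx. destruct (AP x Hx) as [A1 [A2 [A3 [A4 [A5 [A6 [A7 A8]]]]]]].
    apply (alg_pt (1 + Pfun g1 U U1 x / 4) (Efun L h f1 g1 U U1 x) (Xfun h f1 U M x - (1 + Pfun g1 U U1 x / 4) ^ 2)
       (Xfun h f1 U M x) (phi x) (Lam * x ^ 2) d); auto. ring. unfold d in *; lra. }
  assert (Hs8 : 2 < sqrt 8 < 4).
  { assert (S4 : sqrt 4 = 2) by (replace 4 with (2 ^ 2) by ring; apply sqrt_pow2; lra).
    assert (S16 : sqrt 16 = 4) by (replace 16 with (4 ^ 2) by ring; apply sqrt_pow2; lra).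
    pose proof (sqrt_lt_1_alt 4 8 ltac:(lra)). pose proof (sqrt_lt_1_alt 8 16 ltac:(lra)). lra. }
  assert (H88 : sqrt 8 * sqrt 8 = 8) by (apply sqrt_sqrt; lra).
  assert (HRb : RR = 4 / s) by reflexivity.
  clearbody s.
  assert (Ha : 0 < 2 / s <= RR) by (rewrite HRb; split; [apply Rdiv_lt_0_compat; lra| apply Rmult_le_compat_r; [left; apply Rinv_0_lt_compat|]; lra]).
  assert (Hm : 2 / s < sqrt 8 / s < 4 / s).
  { split; apply Rmult_lt_compat_r; try (apply Rinv_0_lt_compat; lra); lra. }
  assert (HLa : Lam * (2 / s) ^ 2 = 4) by (rewrite <- Hs2; field; lra).
  assert (HLm : Lam * (sqrt 8 / s) ^ 2 = 8) by (rewrite <- Hs2; replace ((sqrt 8 / s) ^ 2) with ((sqrt 8 * sqrt 8) / (s * s)) by (field; lra); rewrite H88; field; lra).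
  assert (HLb : Lam * (4 / s) ^ 2 = 16) by (rewrite <- Hs2; field; lra).
  assert (Qa := AQ (2 / s) Ha). rewrite HLa in Qa.
  assert (Qm := AQ (sqrt 8 / s) ltac:(lra)). rewrite HLm in Qm.
  assert (Qb := AQ (4 / s) ltac:(split; lra)). rewrite HLb in Qb.
  replace (64 * 4 / (8 + 4) ^ 2) with (16 / 9) in Qa by field.
  replace (64 * 8 / (8 + 8) ^ 2) with 2 in Qm by field.
  replace (64 * 16 / (8 + 16) ^ 2) with (16 / 9) in Qb by field.
  apply Rabs_le_between in Qa. apply Rabs_le_between in Qm. apply Rabs_le_between in Qb.
  assert (Hrm : phi (sqrt 8 / s) <= phi r) by (apply Hmax; lra).
  assert (Hra : 2 / s < r).
  { destruct (Rle_lt_or_eq_dec (2 / s) r) as [H|H]; [lra| auto |]. rewrite <- H in Hrm. lra. }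
  assert (Hrb : r < 4 / s).
  { destruct (Rle_lt_or_eq_dec r (4 / s)) as [H|H]; [lra| auto |]. rewrite H in Hrm. lra. }
  assert (Hr' : 0 < r <= RR) by lra.
  destruct (AP r Hr') as [A1 [A2 [A3 [A4 [A5 [A6 [A7 A8]]]]]]].
  destruct (CA r Hr') as [[P1 [P2 [P3 [P4 [P5 [P6 [P7 P8]]]]]]] _].
  split; [lra|].
  split.
  { assert (HUr : t0 < U r) by lra.
    destruct (D r ltac:(lra)) as [D1 [D2 D3]]. destruct (Hdf (U r) HUr) as [F1 [F2 F3]].
    assert (Dphi : is_derive phi r (L * (2 * r) * h r * f1 (U r) + L * r ^ 2 * h1 r * f1 (U r)
                    + L * r ^ 2 * h r * (U1 r * f2 (U r)))).
    { unfold phi. eapply der_eq. apply dmult. apply dmult. apply dscal. apply dpow2. apply did.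
      apply Dh; lra. apply (dcomp f1 U). exact F2. exact D1. cbv beta. ring. }
    assert (Hl := fermat phi (2 / s) (4 / s) r _ ltac:(lra) Dphi ltac:(intros x Hx; apply Hmax; lra)).
    rewrite Hl in Dphi. exact Dphi. }
  split.
  { intros x Hx. destruct (AP x ltac:(lra)) as [_ [_ [_ [_ [_ [_ [_ B8]]]]]]]. lra. }
  split.
  { intros z Hz Hdz.
    destruct (alg_final (1 + Pfun g1 U U1 r / 4) (Efun L h f1 g1 U U1 r)
       (Xfun h f1 U M r - (1 + Pfun g1 U U1 r / 4) ^ 2) (Xfun h f1 U M r) (phi r) (Lam * r ^ 2) d z)
      as [Z1 [Z2 Z3]]; auto. ring. unfold d; lra. lra.
    split; [exact Z1|]. split.
    - replace (- r * g1 (U r) * U1 r - 2) with (4 - 4 * (1 + Pfun g1 U U1 r / 4) - 2) by (unfold Pfun; field). exact Z2.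
    - replace (r * s) with (sqrt (Lam * r ^ 2)).
      replace (2 * sqrt 2) with (sqrt 8). exact Z3.
      replace 8 with (2 ^ 2 * 2) by ring. rewrite sqrt_mult, sqrt_pow2 by lra. reflexivity.
      rewrite sqrt_mult, sqrt_pow2 by (try apply pow2_ge_0; lra). rewrite Hsdef. ring. }
  split; [exact P2|]. split; [unfold Lam in A7; lra|].
  assert (Hg1U : 0 < g1 (U r)) by (apply Hg1p; lra).
  replace (g1 (U r) / g1 M) with (exp (- (ln (g1 M) - ln (g1 (U r))))).
  2: { replace (- (ln (g1 M) - ln (g1 (U r)))) with (ln (g1 (U r)) + - ln (g1 M)) by ring.
       rewrite exp_plus, exp_Ropp, !exp_ln by lra. field. lra. }
  split. apply exp_le_mono. lra. rewrite <- exp_0. apply exp_le_mono. lra.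
Qed.

Lemma cw_int (F : R -> R) x : continuous_within (Ici 0) F -> 0 < x -> continuity_pt F x.
Proof.
  intros HC Hx. apply continuity_pt_filterlim. apply filterlim_locally. intros eps.
  destruct (cw_cont (Ici 0) F x HC ltac:(unfold Ici; lra) eps (cond_pos eps)) as [d [Hd Hd']].
  assert (Hm : 0 < Rmin d x) by (apply Rmin_pos; lra).
  exists (mkposreal _ Hm). intros y Hy. apply ballR in Hy. apply ballR.
  assert (Hy' : Rabs (y - x) < Rmin d x) by exact Hy.
  pose proof (Rmin_l d x). pose proof (Rmin_r d x).
  apply Hd'. unfold Ici. apply Rabs_def2 in Hy'. lra. lra.
Qed.

Lemma phi_max (h h1 f1 U U1 : R -> R) L a b : 0 < a <= b -> b < 1 ->
  (forall x, 0 < x < 1 -> is_derive h x (h1 x)) -> (forall x, 0 < x < 1 -> is_derive U x (U1 x)) ->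
  (forall x, 0 < x < 1 -> 0 < U x) -> continuous_within (Ici 0) f1 ->
  exists r, a <= r <= b /\ forall x, a <= x <= b -> L * x ^ 2 * h x * f1 (U x) <= L * r ^ 2 * h r * f1 (U r).
Proof.
  intros Hab Hb Dh DU HU Hf1.
  destruct (continuity_ab_maj (fun x => L * x ^ 2 * h x * f1 (U x)) a b ltac:(lra)) as [r [Hr1 Hr2]].
  - intros c Hc. apply continuity_pt_mult. apply continuity_pt_mult.
    apply continuity_pt_mult. apply continuity_pt_const. intros ? ?; reflexivity.
    apply der_cont with (2 * c * 1). apply (dpow2 (fun x => x)). apply did.
    apply der_cont with (h1 c). apply Dh; lra.
    apply (continuity_pt_comp U f1). apply der_cont with (U1 c). apply DU; lra.
    apply cw_int; auto. apply HU; lra.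
  - exists r. split; auto.
Qed.

Lemma sqrt_gt K Lam : 0 < K -> K ^ 2 < Lam -> K < sqrt Lam.
Proof.
  intros HK HL. rewrite <- (sqrt_pow2 K) by lra. apply sqrt_lt_1_alt. split; [apply pow2_ge_0| exact HL].
Qed.



Lemma div_lt X Y c : 0 < Y -> X < c * Y -> X / Y < c.
Proof. intros. apply Rmult_lt_reg_r with Y; auto. field_simplify; lra. Qed.

Theorem lemma3p3
  (h h1 : R -> R) (f f1 f2 : R -> R) (t0 : R)
  (g1 g2 : R -> R) (q : R) (p : Rbar)
  (lam mu : nat -> R) (u u1 u2 : nat -> R -> R)
  (* h : [0,1] -> (0,oo) continuously differentiable *)
  (Hh : C1_with (Icc 0 1) h h1)
  (Hhpos : forall r, 0 <= r <= 1 -> 0 < h r)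
  (* f : [0,oo) -> [0,oo) continuously differentiable *)
  (Hf : C1_with (Ici 0) f f1)
  (Hfnn : forall t, 0 <= t -> 0 <= f t)
  (Ht0 : 0 <= t0)
  (Hfpos : forall t, t0 <= t -> 0 < f t)
  (Hf2 : C2_with (Ici t0) f f1 f2)
  (* g = log f on [t0,oo), with derivatives g1 = g', g2 = g'' *)
  (Hg1 : deriv_within (Ici t0) (fun t => ln (f t)) g1)
  (Hg2 : deriv_within (Ici t0) g1 g2)
  (* condition (H1)(i) *)
  (Hg1pos : forall t, t0 <= t -> 0 < g1 t)
  (Hg2pos : forall t, t0 <= t -> 0 < g2 t)
  (Hqp : (q = 1 /\ Rbar_lt (Finite 0) p) \/
         (1 < q /\ exists p', p = Finite p' /\ 0 < p'))
  (Hlimq : is_lim (fun t => (g1 t)^2 / (ln (f t) * g2 t)) p_infty (Finite q))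
  (Hlimp : is_lim (fun t => t * g1 t / ln (f t)) p_infty p)
  (* condition (H1)(ii) *)
  (Hq1 : q = 1 ->
     (forall s t, t0 <= s -> s <= t ->
        s * g1 s / ln (f s) <= t * g1 t / ln (f t)) /\
     exists (k : nat) (gh gh1 gh2 : R -> R),
       (1 <= k)%nat /\ C2_with (Ici t0) gh gh1 gh2 /\
       (forall t, t0 <= t -> f t = exp_iter k (gh t)) /\
       (forall s t, t0 <= s -> s <= t -> gh1 t / gh t <= gh1 s / gh s))
  (* the sequence of solutions *)
  (Hlam : forall n, 0 < lam n)
  (Hmu : forall n, 0 < mu n)
  (Hu : forall n, C2_with (Icc 0 1) (u n) (u1 n) (u2 n))
  (Hode : forall n r, 0 < r < 1 ->
     - u2 n r - / r * u1 n r = lam n * h r * f (u n r))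
  (Hupos : forall n r, 0 < r < 1 -> 0 < u n r)
  (Hu0 : forall n, u n 0 = mu n)
  (Hu10 : forall n, u1 n 0 = 0)
  (Hu1 : forall n, u n 1 = 0)
  (Hmuinf : is_lim_seq mu p_infty) :
  let gamma0 := fun n => / sqrt (lam n * h 0 * f1 (mu n)) in
  let phi := fun n r => lam n * r ^ 2 * h r * f1 (u n r) in
  let psi := fun n r => - r * g1 (u n r) * u1 n r in
  exists (sigma : nat -> nat) (r1 : nat -> R),
    (forall n, (sigma n < sigma (S n))%nat) /\
    (forall n, 0 < r1 n < 1 /\
       (exists delta, 0 < delta /\
          forall r, 0 <= r <= 1 -> Rabs (r - r1 n) < delta ->
            t0 <= u (sigma n) r /\ phi (sigma n) r <= phi (sigma n) (r1 n)) /\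
       is_derive (phi (sigma n)) (r1 n) 0) /\
    is_lim_seq (fun n => phi (sigma n) (r1 n)) 2 /\
    is_lim_seq (fun n => psi (sigma n) (r1 n)) 2 /\
    is_lim_seq (fun n => r1 n / gamma0 (sigma n)) (2 * sqrt 2) /\
    (exists C, eventually (fun n =>
        Rabs (u (sigma n) (r1 n) - mu (sigma n)) <=
        C * Rabs (/ ln (f (mu (sigma n)))) *
            Rabs (ln (f (mu (sigma n))) / g1 (mu (sigma n))))) /\
    is_lim_seq (fun n => ln (f (u (sigma n) (r1 n))) / ln (f (mu (sigma n)))) 1 /\
    is_lim_seq (fun n => g1 (u (sigma n) (r1 n)) / g1 (mu (sigma n))) 1.
Proof.
  intros gamma0 phi psi.
  pose proof (fg_rel f f1 f2 g1 g2 t0 Hf2 Hg1 Hg2 Hfpos) as Hrel.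
  pose proof (fg_mono f f1 f2 g1 g2 t0 Hf2 Hg1 Hg2 Hfpos Hg1pos Hg2pos) as Hmono.
  assert (Hdf : forall t, t0 < t -> is_derive f t (f1 t) /\ is_derive f1 t (f2 t) /\ is_derive g1 t (g2 t)).
  { intros t Ht. destruct Hf2 as [A1 [A2 _]]. repeat split; eapply dw_Ici; eauto. }
  assert (Hq : 1 <= q) by (destruct Hqp as [[-> _]|[H _]]; lra).
  assert (Hlin : forall s t, t0 < s <= t -> ln (f s) + g1 s * (t - s) <= ln (f t)) by (intros; apply Hmono; auto).
  pose proof (lnf_inf f g1 t0 Hg1pos Hlin) as LNF.
  pose proof (eps_T f g1 g2 t0 q Hg1pos Hg2pos Hlin Hq Hlimq) as EPS.
  assert (LNG : forall eps T, t0 < T -> (forall t, T <= t -> g2 t <= eps * g1 t ^ 2) ->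
     forall s t, T <= s <= t -> ln (g1 t) - ln (g1 s) <= eps * (ln (f t) - ln (f s))).
  { intros eps T HT HeT s t Hst. apply (lng1_bound f f1 f2 g1 g2 t0 eps Hf2 Hg1 Hg2 Hg1pos s t). lra.
    intros x Hx. apply HeT. lra. }
  assert (Hh0 : 0 < h 0) by (apply Hhpos; lra).
  destruct Hh as [Hhd Hh1c].
  assert (Dh : forall r, 0 < r < 1 -> is_derive h r (h1 r)) by (intros; apply dw_Icc; auto).
  assert (I0 : Icc 0 1 0) by (unfold Icc; lra).
  destruct (evt_max h 0 1) as [Hsup HHsup]; [lra| |].
  { intros x Hx e He. apply (dw_cont _ _ _ x Hhd); auto. }
  assert (HsupP : 0 < Hsup) by (specialize (HHsup 0 ltac:(lra)); lra).
  destruct (evt_max f 0 (t0 + 1)) as [Mf0 HMf0]; [lra| |].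
  { intros x Hx e He. destruct Hf as [Hfd _].
    destruct (dw_cont _ _ _ x Hfd ltac:(unfold Ici; lra) e He) as [d [Hd Hd']].
    exists d. split; auto. intros y Hy Hyx. apply Hd'; auto. unfold Ici; lra. }
  assert (HMf0P : 0 < Mf0) by (specialize (HMf0 t0 ltac:(lra)); specialize (Hfpos t0 ltac:(lra)); lra).
  set (C1 := Rabs (h1 0) + 1).
  assert (HC1 : 0 <= C1) by (unfold C1; pose proof (Rabs_pos (h1 0)); lra).
  destruct (dw_cont _ _ _ 0 Hhd I0 (h 0 / 10) ltac:(lra)) as [d1 [Hd1 Hd1']].
  destruct (cw_cont _ _ 0 Hh1c I0 1 ltac:(lra)) as [d2 [Hd2 Hd2']].
  set (dh := Rmin 1 (Rmin d1 d2)).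
  assert (Hdh : 0 < dh <= 1).
  { unfold dh. split. apply Rmin_pos; [lra| apply Rmin_pos; lra]. apply Rmin_l. }
  assert (HB : forall r, 0 <= r < dh -> (9/10 * h 0 <= h r <= 11/10 * h 0) /\ Rabs (h1 r) <= C1).
  { intros r Hr. pose proof (Rmin_l 1 (Rmin d1 d2)). pose proof (Rmin_r 1 (Rmin d1 d2)).
    pose proof (Rmin_l d1 d2). pose proof (Rmin_r d1 d2). fold dh in H, H0.
    assert (Ir : Icc 0 1 r) by (unfold Icc; lra).
    assert (Rabs (r - 0) < d1) by (rewrite Rminus_0_r, Rabs_pos_eq; lra).
    assert (Rabs (r - 0) < d2) by (rewrite Rminus_0_r, Rabs_pos_eq; lra).
    specialize (Hd1' r Ir H3). specialize (Hd2' r Ir H4).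
    apply Rabs_def2 in Hd1'. split. lra.
    unfold C1. replace (h1 r) with ((h1 r - h1 0) + h1 0) by ring.
    eapply Rle_trans. apply Rabs_triang. lra. }
  assert (Hhlim : forall e, 0 < e -> exists d, 0 < d /\ forall t, 0 < t < d -> Rabs (h t - h 0) < e).
  { intros e He. destruct (dw_cont _ _ _ 0 Hhd I0 e He) as [d [Hd Hd']].
    exists (Rmin d 1). split. apply Rmin_pos; lra. intros t Ht.
    pose proof (Rmin_l d 1). pose proof (Rmin_r d 1).
    apply Hd'. unfold Icc; lra. rewrite Rminus_0_r, Rabs_pos_eq; lra. }
  assert (UB : forall n, _) by (intros n; exact (u_basic h f (u n) (u1 n) (u2 n) (lam n) (mu n) (Hu n) (Hode n)
     (Hupos n) (Hu0 n) (Hu10 n) (Hlam n) Hhpos Hfnn)).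
  assert (Hfm : forall M, t0 + 1 <= M -> Mf0 <= f M -> forall s, 0 <= s <= M -> f s <= f M).
  { intros M HM HfM s0 Hs0. destruct (Rle_or_lt s0 (t0 + 1)) as [Hs1|Hs1].
    - specialize (HMf0 s0 ltac:(lra)). lra.
    - apply (Hmono s0 M). lra. }
  assert (Hg1t : 0 < g1 (t0 + 1)) by (apply Hg1pos; lra).
  assert (LamLB : forall n, t0 + 1 <= mu n -> Mf0 <= f (mu n) ->
            4 * mu n * h 0 * g1 (t0 + 1) / Hsup <= lam n * h 0 * f1 (mu n)).
  { intros n HM HfM. destruct (UB n) as [D [Lim Mon]].
    assert (APR : forall r, 0 < r < 1 -> mu n - u n r <= lam n * Hsup * f (mu n) * r ^ 2 / 4).
    { intros r Hr. apply (u_apri h f (u n) (u1 n) (u2 n) (lam n) (mu n) Hsup D Lim Mon (Hupos n) (Hlam n) Hfnn).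
      intros t Ht; apply Hhpos; lra. apply Hfm; auto. auto. intros t Ht. apply HHsup. lra. }
    assert (HfMp : 0 < f (mu n)) by (apply Hfpos; lra).
    assert (Hc : 0 <= lam n * Hsup * f (mu n)) by (pose proof (Hlam n); apply Rmult_le_pos; [apply Rmult_le_pos|]; lra).
    assert (Mle : mu n <= lam n * Hsup * f (mu n) / 4).
    { apply Rle_plus_epsilon. intros e He.
      destruct (Hu n) as [HdU _].
      destruct (dw_cont _ _ _ 1 HdU ltac:(unfold Icc; lra) e He) as [d [Hd Hd']].
      set (r := Rmax (1/2) (1 - d / 2)).
      assert (Hr : 0 < r < 1 /\ Rabs (r - 1) < d).
      { unfold r. pose proof (Rmax_l (1/2) (1 - d/2)). pose proof (Rmax_r (1/2) (1 - d/2)).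
        unfold Rmax in *. destruct Rle_dec; split; try split; try lra; rewrite Rabs_left; lra. }
      specialize (Hd' r ltac:(unfold Icc; lra) (proj2 Hr)). rewrite Hu1 in Hd'.
      apply Rabs_def2 in Hd'. specialize (APR r (proj1 Hr)).
      assert (r ^ 2 <= 1) by (destruct Hr as [[Hr1 Hr2] _]; nra).
      assert (lam n * Hsup * f (mu n) * r ^ 2 <= lam n * Hsup * f (mu n)) by nra.
      lra. }
    destruct (Hrel (mu n) ltac:(lra)) as [R1 _].
    assert (g1 (t0 + 1) <= g1 (mu n)) by (apply (Hmono (t0 + 1) (mu n)); lra).
    rewrite R1.
    assert (HL : 0 < lam n) by apply Hlam.
    assert (4 * mu n / Hsup <= lam n * f (mu n)).
    { apply div_le; auto. nra. }
    assert (0 <= mu n) by lra.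
    assert (0 <= 4 * mu n / Hsup) by (apply Rmult_le_pos; [lra| left; apply Rinv_0_lt_compat; lra]).
    replace (4 * mu n * h 0 * g1 (t0 + 1) / Hsup) with ((4 * mu n / Hsup) * (h 0 * g1 (t0 + 1))) by (field; lra).
    replace (lam n * h 0 * (f (mu n) * g1 (mu n))) with ((lam n * f (mu n)) * (h 0 * g1 (mu n))) by ring.
    apply Rmult_le_compat; try lra. apply Rmult_le_pos; lra. apply Rmult_le_compat_l; lra. }
  assert (EVG : forall T K, 0 <= K -> exists N, forall n, (N <= n)%nat ->
      T <= mu n - 5 / g1 (t0 + 1) /\ t0 + 1 <= mu n /\ Mf0 <= f (mu n) /\
      K < lam n * h 0 * f1 (mu n) /\ K <= ln (f (mu n))).
  { intros T K HK.
    destruct (LNF K) as [T1 [_ HT1]]. destruct (LNF (ln Mf0)) as [T2 [_ HT2]].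
    set (mb := K * Hsup / (4 * h 0 * g1 (t0 + 1)) + 1).
    set (Mx := Rmax (Rmax (T + 5 / g1 (t0 + 1)) (t0 + 1)) (Rmax (Rmax T1 T2) mb)).
    apply is_lim_seq_spec in Hmuinf. destruct (Hmuinf Mx) as [N HN].
    exists N. intros n Hn. specialize (HN n Hn).
    assert (Hmx : T + 5 / g1 (t0 + 1) <= Mx /\ t0 + 1 <= Mx /\ T1 <= Mx /\ T2 <= Mx /\ mb <= Mx).
    { unfold Mx.
      pose proof (Rmax_l (Rmax (T + 5 / g1 (t0 + 1)) (t0 + 1)) (Rmax (Rmax T1 T2) mb)).
      pose proof (Rmax_r (Rmax (T + 5 / g1 (t0 + 1)) (t0 + 1)) (Rmax (Rmax T1 T2) mb)).
      pose proof (Rmax_l (T + 5 / g1 (t0 + 1)) (t0 + 1)). pose proof (Rmax_r (T + 5 / g1 (t0 + 1)) (t0 + 1)).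
      pose proof (Rmax_l (Rmax T1 T2) mb). pose proof (Rmax_r (Rmax T1 T2) mb).
      pose proof (Rmax_l T1 T2). pose proof (Rmax_r T1 T2). lra. }
    assert (HfM : Mf0 <= f (mu n)).
    { specialize (HT2 (mu n) ltac:(lra)). assert (0 < f (mu n)) by (apply Hfpos; lra).
      rewrite <- (exp_ln Mf0), <- (exp_ln (f (mu n))) by lra. apply exp_le_mono. lra. }
    repeat split; try lra.
    - pose proof (LamLB n ltac:(lra) HfM).
      assert (K < 4 * mu n * h 0 * g1 (t0 + 1) / Hsup); [|lra].
      assert (Hmb : K * Hsup / (4 * h 0 * g1 (t0 + 1)) < mu n) by (unfold mb in Hmx; lra).
      apply Rmult_lt_reg_r with (Hsup / (4 * h 0 * g1 (t0 + 1))). 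
      apply Rdiv_lt_0_compat; [lra| apply Rmult_lt_0_compat; lra].
      replace (4 * mu n * h 0 * g1 (t0 + 1) / Hsup * (Hsup / (4 * h 0 * g1 (t0 + 1)))) with (mu n) by (field; lra).
      replace (K * (Hsup / (4 * h 0 * g1 (t0 + 1)))) with (K * Hsup / (4 * h 0 * g1 (t0 + 1))) by (field; lra). lra.
    - apply HT1. lra. }
  assert (FN : forall eps T n, 0 < eps <= 1/100 -> t0 + 1 < T -> (forall t, T <= t -> g2 t <= eps * g1 t ^ 2) ->
     T <= mu n - 5 / g1 (t0 + 1) -> t0 + 1 <= mu n -> Mf0 <= f (mu n) ->
     16 / dh ^ 2 < lam n * h 0 * f1 (mu n) ->
     let s := sqrt (lam n * h 0 * f1 (mu n)) in
     let RR := 4 / s in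
     let d := 1458 * (100 * eps + RR * (C1 / h 0)) in
     forall r, 2 / s <= r <= 4 / s -> (forall x, 2 / s <= x <= 4 / s -> phi n x <= phi n r) ->
     d <= 1/10000 ->
       (2 / s < r < 4 / s /\ is_derive (phi n) r 0 /\ (forall x, 2 / s < x < 4 / s -> t0 <= u n x) /\
       (forall z, 0 < z <= 1 -> d <= z ^ 2 / 100000000 ->
          Rabs (phi n r - 2) < z /\ Rabs (psi n r - 2) < z /\ Rabs (r * s - 2 * sqrt 2) < z) /\
       mu n - u n r <= 5 / g1 (mu n) /\ 0 <= ln (f (mu n)) - ln (f (u n r)) <= 5 /\
       exp (- (5 * eps)) <= g1 (u n r) / g1 (mu n) <= 1)).
  { intros eps T n Heps HT HeT HTM HM HfM HLam. destruct (UB n) as [D [Lim Mon]].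
    exact (final_n h h1 f f1 f2 g1 g2 (u n) (u1 n) (u2 n) t0 (lam n) (mu n) eps T dh C1 Hrel Hdf Hfpos Hg1pos Hg2pos
      Hmono Hfnn Dh Hhlim HB Hhpos Hdh HC1 D Lim Mon (Hupos n) (Hlam n) Heps HT HeT (LNG eps T ltac:(lra) HeT)
      HTM HM (Hfm (mu n) HM HfM) HLam). }
  assert (RRB : forall eta Lam, 0 < eta -> (4 * (C1 + 1) / (h 0 * eta)) ^ 2 < Lam -> 4 / sqrt Lam * (C1 / h 0) <= eta).
  { intros eta Lam He HL.
    assert (HK : 0 < 4 * (C1 + 1) / (h 0 * eta)) by (apply Rdiv_lt_0_compat; [lra| apply Rmult_lt_0_compat; lra]).
    pose proof (sqrt_gt _ _ HK HL) as Hs.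
    assert (4 / sqrt Lam <= h 0 * eta / (C1 + 1)).
    { apply div_le. lra. apply Rle_trans with (h 0 * eta / (C1 + 1) * (4 * (C1 + 1) / (h 0 * eta))).
      right; field; split; lra. apply Rmult_le_compat_l. apply Rdiv_le_0_compat; [nra| lra]. lra. }
    apply Rle_trans with (h 0 * eta / (C1 + 1) * (C1 / h 0)).
    apply Rmult_le_compat_r. apply Rdiv_le_0_compat; lra. auto.
    apply Rle_trans with (eta * (C1 / (C1 + 1))). right; field; split; lra.
    assert (C1 / (C1 + 1) <= 1) by (apply div_le; lra). nra. }
  assert (SQ : forall Lam, 16 / dh ^ 2 < Lam -> 0 < 4 / sqrt Lam < dh).
  { intros Lam HL. assert (HK : 0 < 4 / dh) by (apply Rdiv_lt_0_compat; lra).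
    assert ((4 / dh) ^ 2 < Lam) by (replace ((4 / dh) ^ 2) with (16 / dh ^ 2) by (field; lra); lra).
    pose proof (sqrt_gt _ _ HK H) as Hs. split. apply Rdiv_lt_0_compat; lra.
    apply div_lt; [lra|]. apply Rle_lt_trans with (dh * (4 / dh)). right; field; lra. 
    apply Rmult_lt_compat_l; lra. }
  set (eps0 := / 2916000000).
  set (eta0 := / 29160000).
  assert (Heps0 : 0 < eps0 <= 1/100).
  { unfold eps0. split. apply Rinv_0_lt_compat; lra.
    assert (/ 2916000000 <= / 100) by (apply Rinv_le_contravar; lra). lra. }
  assert (Heta0 : 0 < eta0) by (unfold eta0; apply Rinv_0_lt_compat; lra).
  set (K0 := Rmax (16 / dh ^ 2) ((4 * (C1 + 1) / (h 0 * eta0)) ^ 2) + 1).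
  assert (HK0 : 0 <= K0 /\ 16 / dh ^ 2 < K0 /\ (4 * (C1 + 1) / (h 0 * eta0)) ^ 2 < K0 /\ 1 <= K0).
  { unfold K0. pose proof (Rmax_l (16 / dh ^ 2) ((4 * (C1 + 1) / (h 0 * eta0)) ^ 2)).
    pose proof (Rmax_r (16 / dh ^ 2) ((4 * (C1 + 1) / (h 0 * eta0)) ^ 2)).
    pose proof (pow2_ge_0 (4 * (C1 + 1) / (h 0 * eta0))). lra. }
  destruct (EPS eps0 ltac:(lra)) as [T0 [HT0 HeT0]].
  destruct (EVG T0 K0 ltac:(lra)) as [N0 HN0].
  set (sg := fun n => (n + N0)%nat).
  assert (Hsg : forall n, (N0 <= sg n)%nat) by (intros; unfold sg; lia).
  assert (EX : forall n, exists r, 2 / sqrt (lam (sg n) * h 0 * f1 (mu (sg n))) <= r <= 4 / sqrt (lam (sg n) * h 0 * f1 (mu (sg n))) /\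
     forall x, 2 / sqrt (lam (sg n) * h 0 * f1 (mu (sg n))) <= x <= 4 / sqrt (lam (sg n) * h 0 * f1 (mu (sg n))) ->
        phi (sg n) x <= phi (sg n) r).
  { intros n. destruct (HN0 (sg n) (Hsg n)) as [G1 [G2 [G3 [G4 G5]]]].
    destruct (SQ (lam (sg n) * h 0 * f1 (mu (sg n))) ltac:(lra)) as [S1 S2].
    destruct (UB (sg n)) as [D _].
    apply (phi_max h h1 f1 (u (sg n)) (u1 (sg n)) (lam (sg n))).
    split. apply Rdiv_lt_0_compat; [lra| apply sqrt_lt_R0; lra].
    apply Rmult_le_compat_r; [left; apply Rinv_0_lt_compat, sqrt_lt_R0; lra| lra]. lra.
    exact Dh. intros x Hx; apply D; auto. apply Hupos. apply Hf. }
  set (r1 := fun n => proj1_sig (constructive_indefinite_description _ (EX n))).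
  assert (Hr1 : forall n, _) by (intros n; exact (proj2_sig (constructive_indefinite_description _ (EX n)))).
  assert (DB : forall eps eta n, 0 < eps -> 0 < eta ->
     (4 * (C1 + 1) / (h 0 * eta)) ^ 2 < lam n * h 0 * f1 (mu n) ->
     1458 * (100 * eps + 4 / sqrt (lam n * h 0 * f1 (mu n)) * (C1 / h 0)) <= 1458 * (100 * eps + eta)).
  { intros eps eta n He Het HL. pose proof (RRB eta _ Het HL). lra. }
  exists sg, r1.
  split. { intros n. unfold sg. lia. }
  split.
  { intros n. destruct (HN0 (sg n) (Hsg n)) as [G1 [G2 [G3 [G4 G5]]]].
    destruct (Hr1 n) as [Hr Hmax].
    destruct (SQ (lam (sg n) * h 0 * f1 (mu (sg n))) ltac:(lra)) as [S1 S2].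
    assert (Hd := DB eps0 eta0 (sg n) ltac:(lra) Heta0 ltac:(lra)).
    assert (Hd' : 1458 * (100 * eps0 + eta0) <= 1/10000) by (unfold eps0, eta0; lra).
    destruct (FN eps0 T0 (sg n) Heps0 HT0 HeT0 G1 G2 G3 ltac:(lra) (r1 n) Hr Hmax ltac:(lra))
      as [F1 [F2 [F3 [F4 [F5 [F6 F7]]]]]].
    split. lra. split.
    - exists (Rmin (r1 n - 2 / sqrt (lam (sg n) * h 0 * f1 (mu (sg n))))
                   (4 / sqrt (lam (sg n) * h 0 * f1 (mu (sg n))) - r1 n)).
      split. apply Rmin_pos; lra.
      intros r Hr0 Hrr. apply Rabs_def2 in Hrr.
      pose proof (Rmin_l (r1 n - 2 / sqrt (lam (sg n) * h 0 * f1 (mu (sg n))))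
                   (4 / sqrt (lam (sg n) * h 0 * f1 (mu (sg n))) - r1 n)).
      pose proof (Rmin_r (r1 n - 2 / sqrt (lam (sg n) * h 0 * f1 (mu (sg n))))
                   (4 / sqrt (lam (sg n) * h 0 * f1 (mu (sg n))) - r1 n)).
      split. apply F3; lra. apply Hmax; lra.
    - exact F2. }
  assert (LIM : forall z, 0 < z <= 1 -> exists N, forall n, (N <= n)%nat ->
     Rabs (phi (sg n) (r1 n) - 2) < z /\ Rabs (psi (sg n) (r1 n) - 2) < z /\
     Rabs (r1 n / gamma0 (sg n) - 2 * sqrt 2) < z /\
     Rabs (ln (f (u (sg n) (r1 n))) / ln (f (mu (sg n))) - 1) < z /\
     Rabs (g1 (u (sg n) (r1 n)) / g1 (mu (sg n)) - 1) < z).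
  { intros z Hz.
    set (eps := Rmin eps0 (z ^ 2 / 29160000000000)).
    set (eta := z ^ 2 / 291600000000).
    assert (Hz2 : 0 < z ^ 2) by (apply pow_lt; lra).
    assert (Hz2' : z ^ 2 <= z) by nra.
    assert (Heps : 0 < eps <= 1/100 /\ eps <= z ^ 2 / 29160000000000).
    { unfold eps. pose proof (Rmin_l eps0 (z ^ 2 / 29160000000000)). pose proof (Rmin_r eps0 (z ^ 2 / 29160000000000)).
      split. split. apply Rmin_pos; lra. lra. lra. }
    assert (Heta : 0 < eta) by (unfold eta; lra).
    set (K := Rmax (Rmax (16 / dh ^ 2) ((4 * (C1 + 1) / (h 0 * eta)) ^ 2)) (10 / z) + 1).
    assert (HK : 0 <= K /\ 16 / dh ^ 2 < K /\ (4 * (C1 + 1) / (h 0 * eta)) ^ 2 < K /\ 10 / z < K).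
    { unfold K. pose proof (Rmax_l (Rmax (16 / dh ^ 2) ((4 * (C1 + 1) / (h 0 * eta)) ^ 2)) (10 / z)).
      pose proof (Rmax_r (Rmax (16 / dh ^ 2) ((4 * (C1 + 1) / (h 0 * eta)) ^ 2)) (10 / z)).
      pose proof (Rmax_l (16 / dh ^ 2) ((4 * (C1 + 1) / (h 0 * eta)) ^ 2)).
      pose proof (Rmax_r (16 / dh ^ 2) ((4 * (C1 + 1) / (h 0 * eta)) ^ 2)).
      pose proof (pow2_ge_0 (4 * (C1 + 1) / (h 0 * eta))). lra. }
    destruct (EPS eps ltac:(lra)) as [T [HT HeT]].
    destruct (EVG T K ltac:(lra)) as [N HN]. exists N. intros n Hn.
    assert (Hn' : (N <= sg n)%nat) by (unfold sg; lia).
    destruct (HN (sg n) Hn') as [G1 [G2 [G3 [G4 G5]]]].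
    destruct (Hr1 n) as [Hr Hmax].
    assert (Hd := DB eps eta (sg n) ltac:(lra) Heta ltac:(lra)).
    assert (Hd' : 1458 * (100 * eps + eta) <= z ^ 2 / 100000000) by (unfold eta; lra).
    destruct (FN eps T (sg n) (proj1 Heps) HT HeT G1 G2 G3 ltac:(lra) (r1 n) Hr Hmax ltac:(lra))
      as [F1 [F2 [F3 [F4 [F5 [F6 F7]]]]]].
    destruct (F4 z Hz ltac:(lra)) as [Z1 [Z2 Z3]].
    set (Lm := lam (sg n) * h 0 * f1 (mu (sg n))) in *.
    assert (HLm : 0 < Lm) by (pose proof (SQ Lm ltac:(lra)); assert (0 < 16 / dh ^ 2) by (apply Rdiv_lt_0_compat; [lra| apply pow_lt; lra]); lra).
    assert (Hs : 0 < sqrt Lm) by (apply sqrt_lt_R0; lra).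
    split; [exact Z1|]. split; [exact Z2|]. split.
    { unfold gamma0. fold Lm. replace (r1 n / / sqrt Lm) with (r1 n * sqrt Lm) by (field; lra). exact Z3. }
    assert (HlnM : 10 / z < ln (f (mu (sg n)))) by lra.
    assert (Hz10 : 0 < 10 / z) by (apply Rdiv_lt_0_compat; lra).
    split.
    { replace (ln (f (u (sg n) (r1 n))) / ln (f (mu (sg n))) - 1) with
        (- (ln (f (mu (sg n))) - ln (f (u (sg n) (r1 n)))) / ln (f (mu (sg n)))) by (field; lra).
      unfold Rdiv. rewrite Rabs_mult, Rabs_Ropp, Rabs_inv, !Rabs_pos_eq by lra.
      apply Rle_lt_trans with (5 * / ln (f (mu (sg n)))).
      apply Rmult_le_compat_r. left; apply Rinv_0_lt_compat; lra. lra.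
      apply Rlt_le_trans with (5 * / (10 / z)).
      apply Rmult_lt_compat_l. lra. apply Rinv_lt_contravar. nra. lra.
      replace (5 * / (10 / z)) with (z / 2) by (field; lra). lra. }
    { pose proof (exp_ineq1_le (- (5 * eps))). apply Rabs_lt_between. split; [|lra].
      assert (5 * eps < z) by nra. lra. } }
  split.
  { apply is_lim_seq_spec. intros e. destruct (LIM (Rmin e 1)) as [N HN].
    { split. apply Rmin_pos; [apply cond_pos|lra]. apply Rmin_r. }
    exists N. intros n Hn. destruct (HN n Hn) as [A _]. pose proof (Rmin_l e 1). lra. }
  split.
  { apply is_lim_seq_spec. intros e. destruct (LIM (Rmin e 1)) as [N HN].
    { split. apply Rmin_pos; [apply cond_pos|lra]. apply Rmin_r. }
    exists N. intros n Hn. destruct (HN n Hn) as [_ [A _]]. pose proof (Rmin_l e 1). lra. }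
  split.
  { apply is_lim_seq_spec. intros e. destruct (LIM (Rmin e 1)) as [N HN].
    { split. apply Rmin_pos; [apply cond_pos|lra]. apply Rmin_r. }
    exists N. intros n Hn. destruct (HN n Hn) as [_ [_ [A _]]]. pose proof (Rmin_l e 1). lra. }
  split.
  { exists 5. exists 0%nat. intros n _.
    destruct (HN0 (sg n) (Hsg n)) as [G1 [G2 [G3 [G4 G5]]]].
    destruct (Hr1 n) as [Hr Hmax].
    destruct (SQ (lam (sg n) * h 0 * f1 (mu (sg n))) ltac:(lra)) as [S1 S2].
    assert (Hd := DB eps0 eta0 (sg n) ltac:(lra) Heta0 ltac:(lra)).
    assert (Hd' : 1458 * (100 * eps0 + eta0) <= 1/10000) by (unfold eps0, eta0; lra).
    destruct (FN eps0 T0 (sg n) Heps0 HT0 HeT0 G1 G2 G3 ltac:(lra) (r1 n) Hr Hmax ltac:(lra))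
      as [F1 [F2 [F3 [F4 [F5 [F6 F7]]]]]].
    destruct (UB (sg n)) as [_ [_ Mon]]. destruct (Mon (r1 n) ltac:(lra)) as [_ HUM].
    assert (Hg1M : 0 < g1 (mu (sg n))) by (apply Hg1pos; lra).
    assert (HlnM : 0 < ln (f (mu (sg n)))) by lra.
    rewrite Rabs_left1 by lra.
    replace (5 * Rabs (/ ln (f (mu (sg n)))) * Rabs (ln (f (mu (sg n))) / g1 (mu (sg n)))) with (5 / g1 (mu (sg n))).
    lra. rewrite Rabs_inv, !Rabs_pos_eq. field. lra. apply Rdiv_le_0_compat; lra. lra. }
  split.
  { apply is_lim_seq_spec. intros e. destruct (LIM (Rmin e 1)) as [N HN].
    { split. apply Rmin_pos; [apply cond_pos|lra]. apply Rmin_r. }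
    exists N. intros n Hn. destruct (HN n Hn) as [_ [_ [_ [A _]]]]. pose proof (Rmin_l e 1). lra. }
  { apply is_lim_seq_spec. intros e. destruct (LIM (Rmin e 1)) as [N HN].
    { split. apply Rmin_pos; [apply cond_pos|lra]. apply Rmin_r. }
    exists N. intros n Hn. destruct (HN n Hn) as [_ [_ [_ [_ A]]]]. pose proof (Rmin_l e 1). lra. }
Qed.
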